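(* Let $\nu\in\mathbb{R}$ and let $\phi$ be a smooth function with $\lim_{x\to\mp\infty}\phi(x)=\pm1$, $\phi'\in L^2(\mathbb{R})$ and $\int_{\mathbb{R}}(1+|x|)|\phi'(x)|\,dx<\infty$. Let $x_0:\mathbb{R}_+\to\mathbb{R}$ be continuously differentiable and let $v$ be a sufficiently regular solution of $$v_t-v_{xx}-\dot x_0 v_x-\dot x_0\phi'+\phi'v+\phi v_x+vv_x+\nu v_{xxx}=0$$ with $\int_{\mathbb{R}}|v(0,x)|^2(1+|x|)\,dx<\infty$. Assume that $t\mapsto\|v(t,\cdot)\|_{L^2}$ is nonincreasing and that there is $C_0$ such that for all $t>0$ $$\int_0^t|\dot x_0(s)|^2\,ds+\int_0^t\|v_x(s,\cdot)\|_{L^2}^2\,ds\le C_0.$$ Then there is a constant $C$ such that for every $T>0$ $$\sup_{0<t<T}\int_{\mathbb{R}}v^2(t,x)|x|\,dx+\int_0^T\|v(t,\cdot)\|_{L^2}^2\,dt\le C.$$ Consequently $\|v(t,\cdot)\|_{L^2}\le Ct^{-1/2}$ for all $t>0$, and for every $p\in(1,2)$ there is $C_p$ with $\sup_{t>0}\|v(t,\cdot)\|_{L^p}\le C_p$.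
   Context: All functions are real-valued; $\dot x_0$ denotes $dx_0/dt$ and $v_x$ the spatial derivative. *)

(* Defs.v *)
From Stdlib Require Import Reals.
From Coquelicot Require Import Coquelicot.
Open Scope R_scope.

(* integral over the whole real line (improper Riemann integral);
   only used for nonnegative continuous integrands, where it agrees with
   the Lebesgue integral *)
Definition integrable_R (f : R -> R) : Prop :=
  ex_RInt_gen f (Rbar_locally m_infty) (Rbar_locally p_infty).
Definition int_R (f : R -> R) : R :=
  RInt_gen f (Rbar_locally m_infty) (Rbar_locally p_infty).

Definition L2sq (f : R -> R) : R := int_R (fun x => (f x) ^ 2).
Definition L2norm (f : R -> R) : R := sqrt (L2sq f).

Definition rpow (a p : R) : R := if Rle_dec a 0 then 0 else Rpower a p.

Definition Lpnorm (p : R) (f : R -> R) : R :=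
  rpow (int_R (fun x => rpow (Rabs (f x)) p)) (/ p).

(* partial derivatives of v : R (time) -> R (space) -> R *)
Definition dx (k : nat) (v : R -> R -> R) : R -> R -> R :=
  fun t x => Derive_n (fun y => v t y) k x.
Definition dt (j : nat) (w : R -> R -> R) : R -> R -> R :=
  fun t x => Derive_n (fun s => w s x) j t.

(* "sufficiently regular": v continuous on R x R, smooth on (0,oo) x R
   (all partials d_t^j d_x^k v exist and are jointly continuous there), and
   on every strip [0,T] x R, v and the derivatives d_t^j d_x^k v (j<=1, k<=3)
   decay like (1+|x|)^(-2), uniformly in time. *)
Definition regular_solution (v : R -> R -> R) : Prop :=
  (forall t x, continuous (fun p : R * R => v (fst p) (snd p)) (t, x)) /\
  (forall k t x, ex_derive_n (fun y => v t y) k x) /\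
  (forall j k t x, 0 < t -> ex_derive_n (fun s => dx k v s x) j t) /\
  (forall j k t x, 0 < t ->
     continuous (fun p : R * R => dt j (dx k v) (fst p) (snd p)) (t, x)) /\
  (forall T, 0 < T -> exists M,
     (forall t x, 0 <= t <= T -> (1 + Rabs x) ^ 2 * Rabs (v t x) <= M) /\
     (forall j k t x, (j <= 1)%nat -> (k <= 3)%nat -> 0 < t <= T ->
        (1 + Rabs x) ^ 2 * Rabs (dt j (dx k v) t x) <= M)).

(* Main.v *)
Require Import Defs.
From Stdlib Require Import Reals Lra Lia Psatz FunctionalExtensionality.
From Coquelicot Require Import Coquelicot.
Open Scope R_scope.

Notation FL := (Rbar_locally m_infty).
Notation FR := (Rbar_locally p_infty).

Lemma ball_R (x y : R) (e : R) : ball x e y <-> Rabs (y - x) < e.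
Proof. split; intro H; exact H. Qed.

Lemma gen_of_char (f : R -> R) (l : R) :
  (forall x, continuous f x) ->
  (forall eps : posreal, exists N, forall a b, a < -N -> N < b -> Rabs (RInt f a b - l) < eps) ->
  is_RInt_gen f FL FR l.
Proof.
  intros Hc H P [eps HP].
  destruct (H eps) as [N HN].
  exists (fun a => a < -N) (fun b => N < b).
  - exists (-N); auto.
  - exists N; auto.
  - intros a b Ha Hb. exists (RInt f a b). split.
    + exact (RInt_correct f a b (ex_RInt_continuous f a b (fun z _ => Hc z))).
    + apply HP. apply ball_R. apply HN; auto.
Qed.

Lemma char_of_gen (f : R -> R) (l : R) :
  is_RInt_gen f FL FR l ->
  (forall eps : posreal, exists N, forall a b, a < -N -> N < b -> Rabs (RInt f a b - l) < eps).
Proof.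
  intros H eps.
  assert (Hl : locally l (ball l eps)) by (exists eps; auto).
  specialize (H _ Hl).
  destruct H as [Q R' [M1 HQ] [M2 HR] HQR].
  exists (Rmax (Rabs M1) (Rabs M2)).
  intros a b Ha Hb.
  destruct (HQR a b) as [y [Hy Hy2]].
  - apply HQ. assert (Rabs M1 <= Rmax (Rabs M1) (Rabs M2)) by apply Rmax_l.
    assert (- Rabs M1 <= M1) by (unfold Rabs; destruct Rcase_abs; lra).
    lra.
  - apply HR. assert (Rabs M2 <= Rmax (Rabs M1) (Rabs M2)) by apply Rmax_r.
    assert (M2 <= Rabs M2) by apply RRle_abs. lra.
  - simpl in Hy. rewrite (is_RInt_unique _ _ _ _ Hy). apply ball_R in Hy2. exact Hy2.
Qed.

Lemma gen_of_cauchy (f : R -> R) :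
  (forall x, continuous f x) ->
  (forall eps : posreal, exists N, forall a b a' b', a < -N -> N < b -> a' < -N -> N < b' ->
        Rabs (RInt f a b - RInt f a' b') < eps) ->
  exists l, is_RInt_gen f FL FR l.
Proof.
  intros Hc H.
  set (F := filtermap (fun ab : R * R => RInt f (fst ab) (snd ab)) (filter_prod FL FR)).
  assert (HF : ProperFilter F) by (apply filtermap_proper_filter; apply filter_prod_proper).
  assert (Hcau : cauchy F).
  { intro eps. destruct (H eps) as [N HN].
    exists (RInt f (-N-1) (N+1)).
    unfold F, filtermap. exists (fun a => a < -N) (fun b => N < b).
    - exists (-N); auto.
    - exists N; auto.
    - intros a b Ha Hb. apply ball_R. simpl. apply HN; lra. }
  exists (lim F).
  apply gen_of_char; auto.
  intro eps.
  pose proof (complete_cauchy F HF Hcau eps) as Hb.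
  unfold F, filtermap in Hb.
  destruct Hb as [Q R' [M1 HQ] [M2 HR] HQR].
  exists (Rmax (Rabs M1) (Rabs M2)).
  intros a b Ha Hb.
  assert (Rabs M1 <= Rmax (Rabs M1) (Rabs M2)) by apply Rmax_l.
  assert (Rabs M2 <= Rmax (Rabs M1) (Rabs M2)) by apply Rmax_r.
  assert (- Rabs M1 <= M1) by (unfold Rabs; destruct Rcase_abs; lra).
  assert (M2 <= Rabs M2) by apply RRle_abs.
  specialize (HQR a b ltac:(apply HQ; lra) ltac:(apply HR; lra)).
  apply ball_R in HQR. simpl in HQR. exact HQR.
Qed.

Definition cts (f : R -> R) := forall x, continuous f x.

Lemma cts_plus f g : cts f -> cts g -> cts (fun x => f x + g x).
Proof. intros Hf Hg x. apply (continuous_plus f g); auto. Qed.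
Lemma cts_mult f g : cts f -> cts g -> cts (fun x => f x * g x).
Proof. intros Hf Hg x. apply (continuous_mult f g); auto. Qed.
Lemma cts_opp f : cts f -> cts (fun x => - f x).
Proof. intros Hf x. apply (continuous_opp f); auto. Qed.
Lemma cts_minus f g : cts f -> cts g -> cts (fun x => f x - g x).
Proof. intros Hf Hg. apply (cts_plus f (fun x => - g x)); auto. apply cts_opp; auto. Qed.
Lemma cts_const c : cts (fun _ => c).
Proof. intros x. apply continuous_const. Qed.
Lemma cts_id : cts (fun x => x).
Proof. intros x. apply continuous_id. Qed.
Lemma cts_abs f : cts f -> cts (fun x => Rabs (f x)).
Proof. intros Hf x. apply (continuous_comp f Rabs); auto. apply (continuous_abs (K:=R_AbsRing)). Qed.
Lemma cts_scal c f : cts f -> cts (fun x => c * f x).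
Proof. intros Hf. apply cts_mult; auto. apply cts_const. Qed.
Lemma cts_pow2 f : cts f -> cts (fun x => f x ^ 2).
Proof. intros Hf. apply (cts_mult f (fun x => f x ^ 1)); auto.
 apply (cts_mult f (fun x => 1)); auto. apply cts_const. Qed.

Lemma exc f a b : cts f -> ex_RInt f a b.
Proof. intros Hf. apply (ex_RInt_continuous (V:=R_CompleteNormedModule)). intros; apply Hf. Qed.

Lemma RInt_plusR f g a b : cts f -> cts g -> RInt (fun x => f x + g x) a b = RInt f a b + RInt g a b.
Proof. intros Hf Hg. apply (RInt_plus (V:=R_CompleteNormedModule)); apply exc; auto. Qed.
Lemma RInt_minusR f g a b : cts f -> cts g -> RInt (fun x => f x - g x) a b = RInt f a b - RInt g a b.
Proof. intros Hf Hg. apply (RInt_minus (V:=R_CompleteNormedModule)); apply exc; auto. Qed.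
Lemma RInt_scalR f c a b : cts f -> RInt (fun x => c * f x) a b = c * RInt f a b.
Proof. intros Hf. apply (RInt_scal (V:=R_CompleteNormedModule)); apply exc; auto. Qed.
Lemma RInt_ChaslesR f a b c : cts f -> RInt f a b + RInt f b c = RInt f a c.
Proof. intros Hf. apply (RInt_Chasles (V:=R_CompleteNormedModule)); apply exc; auto. Qed.
Lemma RInt_swapR f a b : cts f -> RInt f b a = - RInt f a b.
Proof. intros Hf. rewrite <- (opp_RInt_swap (V:=R_CompleteNormedModule)); [reflexivity| apply exc; auto]. Qed.

Lemma RInt_le_R f g a b : a <= b -> cts f -> cts g -> (forall x, f x <= g x) -> RInt f a b <= RInt g a b.
Proof. intros. apply RInt_le; auto; apply exc; auto. Qed.
Lemma RInt_ge0_R f a b : a <= b -> cts f -> (forall x, 0 <= f x) -> 0 <= RInt f a b.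
Proof. intros. apply RInt_ge_0; auto; apply exc; auto. Qed.

Lemma RInt_abs_cmp f h a b : a <= b -> cts f -> cts h -> (forall x, Rabs (f x) <= h x) ->
  Rabs (RInt f a b) <= RInt h a b.
Proof.
  intros Hab Hf Hh H.
  eapply Rle_trans. apply abs_RInt_le; auto. apply exc; auto.
  apply RInt_le_R; auto. apply cts_abs; auto.
Qed.

Lemma RInt_abs_cmp' f h a b : cts f -> cts h -> (forall x, Rabs (f x) <= h x) ->
  Rabs (RInt f a b) <= Rabs (RInt h a b).
Proof.
  intros Hf Hh H.
  assert (H0: forall x, 0 <= h x) by (intro x; specialize (H x); pose proof (Rabs_pos (f x)); lra).
  destruct (Rle_dec a b).
  - rewrite (Rabs_right (RInt h a b)). apply RInt_abs_cmp; auto.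
    apply Rle_ge, RInt_ge0_R; auto.
  - rewrite (RInt_swapR f), (RInt_swapR h); auto. rewrite !Rabs_Ropp.
    rewrite (Rabs_right (RInt h b a)). apply RInt_abs_cmp; auto; lra.
    apply Rle_ge, RInt_ge0_R; auto; lra.
Qed.

Lemma int_R_val f l : is_RInt_gen f FL FR l -> int_R f = l.
Proof. intros H. unfold int_R. apply is_RInt_gen_unique; auto. Qed.

Lemma integrable_is f : integrable_R f -> is_RInt_gen f FL FR (int_R f).
Proof. intros [l Hl]. rewrite (int_R_val f l Hl). exact Hl. Qed.

Lemma int_approx f : integrable_R f ->
  forall eps : posreal, exists N, forall a b, a < -N -> N < b -> Rabs (RInt f a b - int_R f) < eps.
Proof. intros H. apply char_of_gen, integrable_is; auto. Qed.

Lemma integrable_cmp f h : cts f -> cts h -> (forall x, Rabs (f x) <= h x) ->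
  integrable_R h -> integrable_R f.
Proof.
  intros Hf Hh H Hi.
  destruct (gen_of_cauchy f Hf) as [l Hl].
  - intro eps.
    assert (He : 0 < eps / 4) by (destruct eps; simpl; lra).
    destruct (int_approx h Hi (mkposreal _ He)) as [N HN]. simpl in HN.
    exists N. intros a b a' b' Ha Hb Ha' Hb'.
    rewrite <- (RInt_ChaslesR f a a' b), <- (RInt_ChaslesR f a' b' b); auto.
    replace (RInt f a a' + (RInt f a' b' + RInt f b' b) - RInt f a' b')
      with (RInt f a a' + RInt f b' b) by ring.
    eapply Rle_lt_trans. apply Rabs_triang.
    eapply Rle_lt_trans. apply Rplus_le_compat; apply RInt_abs_cmp'; eauto.
    pose proof (HN a b Ha Hb). pose proof (HN a' b Ha' Hb). pose proof (HN a' b' Ha' Hb').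
    pose proof (RInt_ChaslesR h a a' b Hh). pose proof (RInt_ChaslesR h a' b' b Hh).
    destruct eps as [e epos]; simpl in *.
    apply Rabs_def2 in H0. apply Rabs_def2 in H1. apply Rabs_def2 in H2.
    assert (Rabs (RInt h a a') < e/2) by (apply Rabs_def1; lra).
    assert (Rabs (RInt h b' b) < e/2) by (apply Rabs_def1; lra).
    lra.
  - exists l; exact Hl.
Qed.

Lemma int_plus f g : cts f -> cts g -> integrable_R f -> integrable_R g ->
  integrable_R (fun x => f x + g x) /\ int_R (fun x => f x + g x) = int_R f + int_R g.
Proof.
  intros Hf Hg If Ig.
  assert (H : is_RInt_gen (fun x => f x + g x) FL FR (int_R f + int_R g)).
  { apply gen_of_char. apply cts_plus; auto.
    intro eps. assert (He : 0 < eps/2) by (destruct eps; simpl; lra).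
    destruct (int_approx f If (mkposreal _ He)) as [N1 H1].
    destruct (int_approx g Ig (mkposreal _ He)) as [N2 H2]. simpl in *.
    exists (Rmax N1 N2). intros a b Ha Hb.
    pose proof (Rmax_l N1 N2). pose proof (Rmax_r N1 N2).
    rewrite RInt_plusR; auto.
    specialize (H1 a b ltac:(lra) ltac:(lra)). specialize (H2 a b ltac:(lra) ltac:(lra)).
    apply Rabs_def2 in H1. apply Rabs_def2 in H2. apply Rabs_def1; lra. }
  split. exists (int_R f + int_R g); auto. apply int_R_val; auto.
Qed.

Lemma int_scal c f : cts f -> integrable_R f ->
  integrable_R (fun x => c * f x) /\ int_R (fun x => c * f x) = c * int_R f.
Proof.
  intros Hf If.
  assert (H : is_RInt_gen (fun x => c * f x) FL FR (c * int_R f)).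
  { apply gen_of_char. apply cts_scal; auto.
    intro eps. assert (He : 0 < eps/(Rabs c + 1)).
    { destruct eps; simpl. apply Rdiv_lt_0_compat; auto. pose proof (Rabs_pos c); lra. }
    destruct (int_approx f If (mkposreal _ He)) as [N1 H1]. simpl in *.
    exists N1. intros a b Ha Hb.
    rewrite RInt_scalR; auto.
    specialize (H1 a b Ha Hb).
    replace (c * RInt f a b - c * int_R f) with (c * (RInt f a b - int_R f)) by ring.
    rewrite Rabs_mult.
    assert (Hc: 0 <= Rabs c) by apply Rabs_pos.
    apply Rle_lt_trans with (Rabs c * (eps / (Rabs c + 1))).
    apply Rmult_le_compat_l; lra.
    destruct eps as [e ep]; simpl in *.
    apply Rlt_le_trans with ((Rabs c + 1) * (e / (Rabs c + 1))).
    apply Rmult_lt_compat_r. apply Rdiv_lt_0_compat; lra. lra.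
    right; field; lra. }
  split. exists (c * int_R f); auto. apply int_R_val; auto.
Qed.

Lemma lim_le (F G : R -> R -> R) A B :
  (forall eps : posreal, exists N, forall a b, a < -N -> N < b -> Rabs (F a b - A) < eps) ->
  (forall eps : posreal, exists N, forall a b, a < -N -> N < b -> Rabs (G a b - B) < eps) ->
  (exists N0, forall a b, a < -N0 -> N0 < b -> F a b <= G a b) -> A <= B.
Proof.
  intros HF HG [N0 H].
  apply Rnot_lt_le. intro Hlt.
  assert (He : 0 < (A - B)/2) by lra.
  destruct (HF (mkposreal _ He)) as [N1 H1].
  destruct (HG (mkposreal _ He)) as [N2 H2]. simpl in *.
  set (N := Rabs N1 + Rabs N2 + Rabs N0 + 1).
  assert (N1 <= Rabs N1) by apply RRle_abs. assert (N2 <= Rabs N2) by apply RRle_abs.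
  assert (N0 <= Rabs N0) by apply RRle_abs.
  assert (0 <= Rabs N1) by apply Rabs_pos. assert (0 <= Rabs N2) by apply Rabs_pos.
  assert (0 <= Rabs N0) by apply Rabs_pos.
  specialize (H1 (-N) N ltac:(unfold N; lra) ltac:(unfold N; lra)).
  specialize (H2 (-N) N ltac:(unfold N; lra) ltac:(unfold N; lra)).
  specialize (H (-N) N ltac:(unfold N; lra) ltac:(unfold N; lra)).
  apply Rabs_def2 in H1. apply Rabs_def2 in H2. lra.
Qed.

Lemma approx_const (c : R) : forall eps : posreal, exists N, forall a b : R, a < -N -> N < b -> Rabs (c - c) < eps.
Proof. intros eps; exists 0; intros; rewrite Rminus_diag, Rabs_R0; destruct eps; auto. Qed.

Lemma int_le f g : cts f -> cts g -> integrable_R f -> integrable_R g ->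
  (forall x, f x <= g x) -> int_R f <= int_R g.
Proof.
  intros Hf Hg If Ig H.
  apply (lim_le (RInt f) (RInt g)); try apply int_approx; auto.
  exists 0; intros; apply RInt_le_R; auto; lra.
Qed.

Lemma int_ge0 f : cts f -> integrable_R f -> (forall x, 0 <= f x) -> 0 <= int_R f.
Proof.
  intros Hf If H.
  apply (lim_le (fun _ _ => 0) (RInt f)); try apply int_approx; auto.
  apply approx_const.
  exists 0; intros; apply RInt_ge0_R; auto; lra.
Qed.

Lemma Rabs_big a : a <= Rabs a /\ - Rabs a <= a /\ 0 <= Rabs a.
Proof. unfold Rabs; destruct Rcase_abs; lra. Qed.

Lemma RInt_le_int g a b : cts g -> integrable_R g -> (forall x, 0 <= g x) -> a <= b ->
  RInt g a b <= int_R g.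
Proof.
  intros Hg Ig H Hab.
  apply (lim_le (fun _ _ => RInt g a b) (RInt g)); try apply int_approx; auto.
  apply approx_const.
  exists (Rabs a + Rabs b). intros a' b' Ha Hb.
  pose proof (Rabs_big a). pose proof (Rabs_big b).
  rewrite <- (RInt_ChaslesR g a' a b'), <- (RInt_ChaslesR g a b b'); auto.
  pose proof (RInt_ge0_R g a' a ltac:(lra) Hg H).
  pose proof (RInt_ge0_R g b b' ltac:(lra) Hg H). lra.
Qed.

Lemma int_tail f h a b : cts f -> cts h -> (forall x, Rabs (f x) <= h x) -> integrable_R h ->
  a <= b -> Rabs (int_R f - RInt f a b) <= int_R h - RInt h a b.
Proof.
  intros Hf Hh H Ih Hab.
  assert (If : integrable_R f) by (eapply integrable_cmp; eauto).
  apply (lim_le (fun a' b' => Rabs (RInt f a' b' - RInt f a b)) (fun a' b' => RInt h a' b' - RInt h a b)).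
  - intro eps. destruct (int_approx f If eps) as [N HN]. exists N. intros a' b' Ha Hb.
    specialize (HN a' b' Ha Hb).
    eapply Rle_lt_trans; [|exact HN].
    replace (RInt f a' b' - int_R f) with ((RInt f a' b' - RInt f a b) - (int_R f - RInt f a b)) by ring.
    apply Rabs_triang_inv2.
  - intro eps. destruct (int_approx h Ih eps) as [N HN]. exists N. intros a' b' Ha Hb.
    specialize (HN a' b' Ha Hb).
    replace (RInt h a' b' - RInt h a b - (int_R h - RInt h a b)) with (RInt h a' b' - int_R h) by ring.
    auto.
  - exists (Rabs a + Rabs b). intros a' b' Ha Hb.
    pose proof (Rabs_big a). pose proof (Rabs_big b).
    rewrite <- (RInt_ChaslesR f a' a b'), <- (RInt_ChaslesR f a b b'); auto.
    rewrite <- (RInt_ChaslesR h a' a b'), <- (RInt_ChaslesR h a b b'); auto.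
    replace (RInt f a' a + (RInt f a b + RInt f b b') - RInt f a b) with (RInt f a' a + RInt f b b') by ring.
    replace (RInt h a' a + (RInt h a b + RInt h b b') - RInt h a b) with (RInt h a' a + RInt h b b') by ring.
    eapply Rle_trans. apply Rabs_triang.
    apply Rplus_le_compat; apply RInt_abs_cmp; auto; lra.
Qed.

Lemma integrable_mono g K : cts g -> (forall x, 0 <= g x) ->
  (forall a b, a <= b -> RInt g a b <= K) -> integrable_R g.
Proof.
  intros Hg H HK.
  set (E := fun y => exists a b, a <= b /\ y = RInt g a b).
  assert (HE : bound E) by (exists K; intros y [a [b [Hab ->]]]; auto).
  assert (HE2 : exists y, E y) by (exists (RInt g 0 0); exists 0, 0; split; auto; lra).
  destruct (completeness E HE HE2) as [S [HS1 HS2]].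
  exists S. apply gen_of_char; auto.
  intro eps.
  assert (Hex : exists a0 b0, a0 <= b0 /\ S - eps < RInt g a0 b0).
  { apply Classical_Prop.NNPP. intro Hn.
    assert (is_upper_bound E (S - eps)).
    { intros y [a [b [Hab ->]]]. apply Rnot_lt_le. intro Hl. apply Hn. exists a, b; auto. }
    specialize (HS2 _ H0). destruct eps; simpl in *; lra. }
  destruct Hex as [a0 [b0 [Hab0 Hlt]]].
  exists (Rabs a0 + Rabs b0). intros a b Ha Hb.
  pose proof (Rabs_big a0). pose proof (Rabs_big b0).
  assert (Hup : RInt g a b <= S) by (apply HS1; exists a, b; split; auto; lra).
  rewrite <- (RInt_ChaslesR g a a0 b), <- (RInt_ChaslesR g a0 b0 b) in *; auto.
  pose proof (RInt_ge0_R g a a0 ltac:(lra) Hg H).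
  pose proof (RInt_ge0_R g b0 b ltac:(lra) Hg H).
  apply Rabs_def1; lra.
Qed.

Definition k1 (x : R) := / (1 + x ^ 2).

Lemma k1_pos x : 0 < 1 + x ^ 2.
Proof. nra. Qed.

Lemma cts_k1 : cts k1.
Proof.
  intro x. unfold k1. apply continuity_pt_filterlim.
  apply continuity_pt_inv. 2: pose proof (k1_pos x); lra.
  apply continuity_pt_plus. apply continuity_pt_const; intros ? ?; auto.
  apply derivable_continuous_pt. apply derivable_pt_pow.
Qed.

Lemma RInt_k1 a b : RInt k1 a b = atan b - atan a.
Proof.
  apply is_RInt_unique.
  apply (is_RInt_derive (V:=R_CompleteNormedModule) atan k1).
  - intros x _. unfold k1. replace (x ^ 2) with (x²) by (unfold Rsqr; ring). apply is_derive_atan.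
  - intros x _. apply cts_k1.
Qed.

Lemma k1_ge0 x : 0 <= k1 x.
Proof. unfold k1. left. apply Rinv_0_lt_compat, k1_pos. Qed.

Lemma integrable_k1 : integrable_R k1.
Proof.
  apply (integrable_mono k1 PI cts_k1 k1_ge0).
  intros a b _. rewrite RInt_k1. pose proof (atan_bound a). pose proof (atan_bound b). lra.
Qed.

Lemma int_k1_le : int_R k1 <= PI.
Proof.
  apply (lim_le (RInt k1) (fun _ _ => PI)); try apply int_approx; try apply integrable_k1.
  apply approx_const.
  exists 0. intros a b _ _. rewrite RInt_k1. pose proof (atan_bound a). pose proof (atan_bound b). lra.
Qed.

Definition vanish (F : R -> R) := forall eps : posreal, exists N, forall x, N < Rabs x -> Rabs (F x) < eps.

Lemma RInt_deriv F F' a b : (forall x, is_derive F x (F' x)) -> cts F' -> RInt F' a b = F b - F a.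
Proof.
  intros HD Hc. apply is_RInt_unique.
  apply (is_RInt_derive (V:=R_CompleteNormedModule) F F'); auto.
Qed.

Lemma small_zero x : (forall eps : posreal, Rabs x < eps) -> x = 0.
Proof.
  intros H. destruct (Req_dec x 0) as [|Hn]; auto.
  assert (Hp : 0 < Rabs x) by (apply Rabs_pos_lt; auto).
  specialize (H (mkposreal _ Hp)). simpl in H. lra.
Qed.

Lemma small_le x y : (forall eps : posreal, x <= y + eps) -> x <= y.
Proof.
  intros H. apply Rnot_lt_le. intro Hl.
  assert (Hp : 0 < (x - y)/2) by lra.
  specialize (H (mkposreal _ Hp)). simpl in H. lra.
Qed.

Lemma int_deriv0 F F' : (forall x, is_derive F x (F' x)) -> cts F' -> integrable_R F' -> vanish F ->
  int_R F' = 0.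
Proof.
  intros HD Hc Hi Hv.
  apply small_zero. intro eps.
  assert (He : 0 < eps/4) by (destruct eps; simpl; lra).
  destruct (int_approx F' Hi (mkposreal _ He)) as [N1 H1].
  destruct (Hv (mkposreal _ He)) as [N2 H2]. simpl in *.
  set (N := Rabs N1 + Rabs N2 + 1).
  pose proof (Rabs_big N1). pose proof (Rabs_big N2).
  specialize (H1 (-N) N ltac:(unfold N; lra) ltac:(unfold N; lra)).
  rewrite (RInt_deriv F F') in H1; auto.
  assert (Ha : Rabs (F N) < eps/4) by (apply H2; unfold N; rewrite Rabs_right; lra).
  assert (Hb : Rabs (F (-N)) < eps/4) by (apply H2; unfold N; rewrite Rabs_left; lra).
  apply Rabs_def2 in H1. apply Rabs_def2 in Ha. apply Rabs_def2 in Hb.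
  apply Rabs_def1; destruct eps; simpl in *; lra.
Qed.

Lemma sobolev u u' et : (forall x, is_derive u x (u' x)) -> cts u' -> cts u ->
  vanish u -> integrable_R (fun x => u x ^ 2) -> integrable_R (fun x => u' x ^ 2) -> 0 < et ->
  forall x, u x ^ 2 <= et * int_R (fun x => u x ^ 2) + / et * int_R (fun x => u' x ^ 2).
Proof.
  intros HD Hc' Hc Hv I1 I2 He x.
  assert (Cu2 : cts (fun x => u x ^ 2)) by (apply cts_pow2; auto).
  assert (Cu'2 : cts (fun x => u' x ^ 2)) by (apply cts_pow2; auto).
  set (g := fun y : R => et * u y ^ 2 + / et * u' y ^ 2).
  assert (Cg : cts g) by (apply cts_plus; apply cts_scal; auto).
  destruct (int_scal et _ Cu2 I1) as [Ia Ea].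
  destruct (int_scal (/ et) _ Cu'2 I2) as [Ib Eb].
  destruct (int_plus _ _ (cts_scal et _ Cu2) (cts_scal (/et) _ Cu'2) Ia Ib) as [Ig Eg].
  fold g in Ig, Eg. rewrite Ea, Eb in Eg. rewrite <- Eg.
  assert (Hg0 : forall y, 0 <= g y).
  { intro y. unfold g. assert (0 < /et) by (apply Rinv_0_lt_compat; auto).
    assert (0 <= u y ^ 2) by nra. assert (0 <= u' y ^ 2) by nra. nra. }
  set (dd := fun y : R => 2 * u y * u' y).
  assert (Cd : cts dd) by (unfold dd; apply cts_mult; [apply cts_scal|]; auto).
  assert (Hdg : forall y, dd y <= g y).
  { intro y. unfold dd, g.
    assert (Hk : 0 <= (et * u y - u' y) ^ 2 / et) by (unfold Rdiv; apply Rmult_le_pos; [apply pow2_ge_0 | left; apply Rinv_0_lt_compat; auto]).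
    replace (et * u y ^ 2 + / et * u' y ^ 2) with (2 * u y * u' y + (et * u y - u' y) ^ 2 / et)
      by (field; lra). lra. }
  apply small_le. intro eps.
  assert (Hm : 0 < Rmin eps 1) by (apply Rmin_pos; [destruct eps|]; simpl; lra).
  destruct (Hv (mkposreal _ Hm)) as [N HN]. simpl in HN.
  set (a := Rmin x (- Rabs N - 1)).
  assert (Ha : Rabs (u a) < Rmin eps 1) by (apply HN; unfold a; pose proof (Rabs_big N);
     pose proof (Rmin_r x (- Rabs N - 1)); rewrite Rabs_left; lra).
  assert (Hax : a <= x) by apply Rmin_l.
  assert (Hint : RInt dd a x = u x ^ 2 - u a ^ 2).
  { apply (RInt_deriv (fun y => u y ^ 2)); auto. intro y. unfold dd.
    assert (H0 : is_derive (fun y => u y * u y) y (2 * u y * u' y)).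
    { replace (2 * u y * u' y) with (u' y * u y + u y * u' y) by ring.
      apply (is_derive_mult u u y (u' y) (u' y)); auto.
      intros; unfold mult; simpl; ring. }
    eapply is_derive_ext; [|exact H0]. intro; simpl; ring. }
  pose proof (RInt_le_R dd g a x Hax Cd Cg Hdg).
  pose proof (RInt_le_int g a x Cg Ig Hg0 Hax).
  assert (Hua : u a ^ 2 <= eps).
  { destruct eps as [e ep]; cbn [pos] in *.
    pose proof (Rmin_l e 1). pose proof (Rmin_r e 1). pose proof (Rabs_pos (u a)).
    replace (u a ^ 2) with (Rabs (u a) * Rabs (u a)) by (rewrite <- Rabs_mult; rewrite Rabs_right; [ring| nra]).
    assert (Rabs (u a) * Rabs (u a) <= Rmin e 1 * 1) by (apply Rmult_le_compat; lra).
    lra. }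
  unfold g in *. lra.
Qed.

Lemma Rabs_le_elim x a : Rabs x <= a -> - a <= x <= a.
Proof. unfold Rabs; destruct Rcase_abs; lra. Qed.
Lemma Rabs_lt_elim x a : Rabs x < a -> - a < x < a.
Proof. unfold Rabs; destruct Rcase_abs; lra. Qed.
Lemma Rabs_le_intro x a : - a <= x <= a -> Rabs x <= a.
Proof. unfold Rabs; destruct Rcase_abs; lra. Qed.

Lemma cts_of_ex_derive f : (forall x, ex_derive f x) -> cts f.
Proof. intros H x. apply (ex_derive_continuous (K:=R_AbsRing) (V:=R_NormedModule)). auto. Qed.
Lemma cts_of_derive f f' : (forall x, is_derive f x (f' x)) -> cts f.
Proof. intros H. apply cts_of_ex_derive. intro x. exists (f' x); auto. Qed.

Lemma cont_of_eps f x : (forall eps : posreal, exists d : posreal, forall y, Rabs (y - x) < d -> Rabs (f y - f x) < eps) ->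
  continuous f x.
Proof.
  intros H. apply continuity_pt_filterlim.
  intros eps Heps. destruct (H (mkposreal _ Heps)) as [d Hd].
  exists d. split. destruct d; simpl; lra.
  intros y [_ Hy]. apply Hd. exact Hy.
Qed.

Lemma eps_of_cont f x : continuous f x ->
  forall eps : posreal, exists d : posreal, forall y, Rabs (y - x) < d -> Rabs (f y - f x) < eps.
Proof.
  intros H eps. apply continuity_pt_filterlim in H.
  destruct (H eps (cond_pos eps)) as [d [Hd1 Hd2]].
  exists (mkposreal _ Hd1). intros y Hy.
  destruct (Req_dec y x) as [->|Hne].
  - rewrite Rminus_diag, Rabs_R0. apply cond_pos.
  - apply Hd2. split. split; [exact I| auto]. exact Hy.
Qed.

Lemma c2d_of_cont (F : R -> R -> R) t x :
  continuous (fun p : R * R => F (fst p) (snd p)) (t, x) -> continuity_2d_pt F t x.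
Proof. intros H. apply continuity_2d_pt_filterlim. exact H. Qed.

Lemma c2d_cts2 (F : R -> R -> R) t x : continuity_2d_pt F t x -> continuous (F t) x.
Proof.
  intros H. apply cont_of_eps. intro eps. destruct (H eps) as [d Hd].
  exists d. intros y Hy. apply Hd; auto. rewrite Rminus_diag, Rabs_R0. apply cond_pos.
Qed.

Lemma c2d_cts1 (F : R -> R -> R) t x : continuity_2d_pt F t x -> continuous (fun s => F s x) t.
Proof.
  intros H. apply cont_of_eps. intro eps. destruct (H eps) as [d Hd].
  exists d. intros y Hy. apply Hd; auto. rewrite Rminus_diag, Rabs_R0. apply cond_pos.
Qed.

Lemma param_cont (g : R -> R -> R) (h : R -> R) (al be t0 : R) :
  al <= t0 <= be ->
  (forall t x, al <= t <= be -> continuity_2d_pt g t x) ->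
  (forall t x, al <= t <= be -> Rabs (g t x) <= h x) -> cts h -> integrable_R h ->
  forall eps : posreal, exists d : posreal, forall t, al <= t <= be -> Rabs (t - t0) < d ->
    Rabs (int_R (g t) - int_R (g t0)) < eps.
Proof.
  intros Ht0 Hc Hb Ch Ih eps.
  assert (Cg : forall t, al <= t <= be -> cts (g t)) by (intros t Ht x; apply c2d_cts2; auto).
  assert (He4 : 0 < eps / 4) by (destruct eps; simpl; lra).
  destruct (int_approx h Ih (mkposreal _ He4)) as [N0 HN0]. simpl in HN0.
  set (N := Rabs N0 + 1).
  pose proof (Rabs_big N0).
  assert (HN : Rabs (int_R h - RInt h (-N) N) < eps / 4).
  { rewrite Rabs_minus_sym. apply HN0; unfold N; lra. }
  assert (Npos : 0 < N) by (unfold N; lra).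
  assert (He' : 0 < eps / (4 * (2 * N + 1))).
  { apply Rdiv_lt_0_compat. destruct eps; simpl; lra. lra. }
  destruct (uniform_continuity_2d g al be (-N) N) with (eps := mkposreal _ He') as [d Hd].
  { intros; apply Hc; auto. }
  exists d. intros t Ht Htd.
  assert (T1 : Rabs (int_R (g t) - RInt (g t) (-N) N) <= int_R h - RInt h (-N) N)
    by (apply int_tail; auto; lra).
  assert (T2 : Rabs (int_R (g t0) - RInt (g t0) (-N) N) <= int_R h - RInt h (-N) N)
    by (apply int_tail; auto; lra).
  assert (T3 : Rabs (RInt (g t) (-N) N - RInt (g t0) (-N) N) <= (N - - N) * (eps / (4 * (2 * N + 1)))).
  { rewrite <- RInt_minusR; auto.
    apply abs_RInt_le_const. lra. apply exc. apply cts_minus; auto.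
    intros x Hx. left. apply (Hd t0 x t x); auto; try lra. rewrite Rminus_diag, Rabs_R0. apply cond_pos. }
  assert (T4 : (N - - N) * (eps / (4 * (2 * N + 1))) < eps / 4).
  { destruct eps as [e ep]; simpl in *.
    replace ((N - - N) * (e / (4 * (2 * N + 1)))) with ((e/4) * (2 * N / (2 * N + 1))) by (field; lra).
    assert (2 * N / (2 * N + 1) < 1). { apply (Rmult_lt_reg_r (2 * N + 1)). lra.
      unfold Rdiv. rewrite Rmult_assoc, Rinv_l; lra. }
    nra. }
  apply Rabs_def2 in HN.
  replace (int_R (g t) - int_R (g t0)) with
    ((int_R (g t) - RInt (g t) (-N) N) - (int_R (g t0) - RInt (g t0) (-N) N) + (RInt (g t) (-N) N - RInt (g t0) (-N) N)) by ring.
  eapply Rle_lt_trans. apply Rabs_triang.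
  eapply Rle_lt_trans. apply Rplus_le_compat_r. apply Rabs_triang.
  rewrite Rabs_Ropp. destruct eps; simpl in *. lra.
Qed.

Lemma locally_pos tau : 0 < tau -> locally tau (fun t => 0 < t).
Proof.
  intros Ht. exists (mkposreal _ Ht). intros y Hy.
  pose proof (proj1 (ball_R tau y tau) Hy) as H.
  destruct (Rabs_def2 _ _ H) as [H1 H2]. change R in y. lra.
Qed.

Lemma RInt_param_cont (D : R -> R -> R) a b al be t0 :
  a <= b -> al < t0 < be ->
  (forall t x, al <= t <= be -> continuity_2d_pt D t x) ->
  continuous (fun t => RInt (D t) a b) t0.
Proof.
  intros Hab Ht0 Hc.
  apply cont_of_eps. intro eps.
  assert (He' : 0 < eps / (b - a + 1)) by (apply Rdiv_lt_0_compat; [destruct eps; simpl|]; lra).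
  destruct (uniform_continuity_2d D al be a b (fun t x Ht _ => Hc t x Ht) (mkposreal _ He')) as [d Hd].
  assert (Hd' : 0 < Rmin d (Rmin (t0 - al) (be - t0))).
  { apply Rmin_pos. apply cond_pos. apply Rmin_pos; lra. }
  exists (mkposreal _ Hd'). simpl. intros y Hy.
  pose proof (Rmin_l d (Rmin (t0 - al) (be - t0))).
  pose proof (Rmin_r d (Rmin (t0 - al) (be - t0))).
  pose proof (Rmin_l (t0 - al) (be - t0)). pose proof (Rmin_r (t0 - al) (be - t0)).
  apply Rabs_def2 in Hy as Hy'.
  assert (Cy : cts (D y)) by (intro x; apply c2d_cts2; apply Hc; lra).
  assert (C0 : cts (D t0)) by (intro x; apply c2d_cts2; apply Hc; lra).
  rewrite <- RInt_minusR; auto.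
  eapply Rle_lt_trans. apply abs_RInt_le_const with (M := eps / (b - a + 1)); auto.
  apply exc; apply cts_minus; auto.
  intros x Hx. left. apply (Hd t0 x y x); try lra. rewrite Rminus_diag, Rabs_R0. apply cond_pos.
  destruct eps as [e ep]; simpl.
  replace ((b - a) * (e / (b - a + 1))) with (e * ((b - a) / (b - a + 1))) by (field; lra).
  assert ((b - a) / (b - a + 1) < 1).
  { apply (Rmult_lt_reg_r (b - a + 1)). lra. unfold Rdiv. rewrite Rmult_assoc, Rinv_l; lra. }
  nra.
Qed.

Lemma trunc_deriv (G D : R -> R -> R) a b tau : 0 < tau ->
  (forall t x, 0 < t -> is_derive (fun s => G s x) t (D t x)) ->
  (forall t x, 0 < t -> continuity_2d_pt D t x) ->
  (forall t, 0 < t -> cts (G t)) ->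
  is_derive (fun t => RInt (G t) a b) tau (RInt (D tau) a b).
Proof.
  intros Ht HD HDc HGc.
  assert (Hloc := locally_pos tau Ht).
  assert (E : RInt (D tau) a b = RInt (fun x => Derive (fun u => G u x) tau) a b).
  { apply RInt_ext. intros x _. symmetry. apply is_derive_unique. apply HD; auto. }
  rewrite E.
  apply (is_derive_RInt_param G a b tau).
  - destruct Hloc as [e He]. exists e. intros y Hy x _. exists (D y x). apply HD. apply He; auto.
  - intros x _. apply continuity_2d_pt_ext_loc with (f := D).
    + exists (mkposreal _ Ht). intros u v Hu _. cbn [pos] in Hu. destruct (Rabs_def2 _ _ Hu).
      symmetry. apply is_derive_unique. apply HD. lra.
    + apply HDc; auto.
  - destruct Hloc as [e He]. exists e. intros y Hy. apply exc. apply HGc. apply He; auto.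
Qed.

Lemma energy_step (G D : R -> R -> R) (h gam : R -> R) t1 t2 :
  0 < t1 <= t2 ->
  (forall t x, 0 < t -> is_derive (fun s => G s x) t (D t x)) ->
  (forall t x, 0 < t -> continuity_2d_pt D t x) ->
  (forall t, 0 < t -> cts (G t)) ->
  cts h -> integrable_R h ->
  (forall t x, t1 <= t <= t2 -> Rabs (G t x) <= h x) ->
  (forall t x, t1 <= t <= t2 -> Rabs (D t x) <= h x) ->
  ex_RInt gam t1 t2 ->
  (forall t, t1 <= t <= t2 -> int_R (D t) <= gam t) ->
  int_R (G t2) - int_R (G t1) <= RInt gam t1 t2.
Proof.
  intros Ht HD HDc HGc Ch Ih HbG HbD Igam Hgam.
  assert (CD : forall t, 0 < t -> cts (D t)) by (intros t H x; apply c2d_cts2; auto).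
  apply small_le. intro eps.
  set (L := t2 - t1 + 1).
  assert (HL : 0 < L) by (unfold L; lra).
  assert (He : 0 < eps / (3 * L)) by (apply Rdiv_lt_0_compat; [destruct eps; simpl|]; lra).
  destruct (int_approx h Ih (mkposreal _ He)) as [N0 HN0]. simpl in HN0.
  destruct (int_approx (G t1)) with (eps := mkposreal _ He) as [N1 HN1].
  { apply (integrable_cmp _ h); auto. apply HGc; lra. intros; apply HbG; lra. }
  destruct (int_approx (G t2)) with (eps := mkposreal _ He) as [N2 HN2].
  { apply (integrable_cmp _ h); auto. apply HGc; lra. intros; apply HbG; lra. }
  simpl in HN1, HN2.
  set (N := Rabs N0 + Rabs N1 + Rabs N2 + 1).
  pose proof (Rabs_big N0). pose proof (Rabs_big N1). pose proof (Rabs_big N2).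
  specialize (HN0 (-N) N ltac:(unfold N; lra) ltac:(unfold N; lra)).
  specialize (HN1 (-N) N ltac:(unfold N; lra) ltac:(unfold N; lra)).
  specialize (HN2 (-N) N ltac:(unfold N; lra) ltac:(unfold N; lra)).
  set (rho := int_R h - RInt h (-N) N).
  set (ER := fun t => RInt (G t) (-N) N).
  set (ER' := fun t => RInt (D t) (-N) N).
  assert (Hder : forall t, 0 < t -> is_derive ER t (ER' t)).
  { intros t Htp. apply trunc_deriv; auto. }
  assert (Hcont : forall t, 0 < t -> continuous ER' t).
  { intros t Htp. apply (RInt_param_cont D (-N) N (t/2) (t+1)). unfold N; lra. lra.
    intros; apply HDc; lra. }
  assert (Hftc : is_RInt ER' t1 t2 (ER t2 - ER t1)).
  { apply (is_RInt_derive (V:=R_CompleteNormedModule) ER ER').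
    - intros x Hx. rewrite Rmin_left, Rmax_right in Hx by lra. apply Hder; lra.
    - intros x Hx. rewrite Rmin_left, Rmax_right in Hx by lra. apply Hcont; lra. }
  assert (Hle : forall t, t1 <= t <= t2 -> ER' t <= gam t + rho).
  { intros t Htt.
    assert (T : Rabs (int_R (D t) - ER' t) <= rho).
    { apply int_tail; [apply CD; lra | auto | intros; apply HbD; auto | auto | unfold N; lra]. }
    apply Rabs_le_elim in T. specialize (Hgam t Htt). lra. }
  assert (HR : RInt ER' t1 t2 <= RInt (fun t => gam t + rho) t1 t2).
  { apply RInt_le. lra. exists (ER t2 - ER t1); exact Hftc.
    apply (ex_RInt_plus (V:=R_NormedModule) gam (fun _ => rho)); auto. apply ex_RInt_const.
    intros; apply Hle; lra. }
  rewrite (is_RInt_unique _ _ _ _ Hftc) in HR.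
  rewrite (RInt_plus (V:=R_CompleteNormedModule) gam (fun _ => rho)) in HR; auto.
  2: apply ex_RInt_const.
  rewrite RInt_const in HR.
  change (ER t2 - ER t1 <= RInt gam t1 t2 + (t2 - t1) * rho) in HR.
  unfold ER, rho in *.
  apply Rabs_lt_elim in HN0. apply Rabs_lt_elim in HN1. apply Rabs_lt_elim in HN2.
  assert (e3 : (t2 - t1) * (eps / (3 * L)) + 2 * (eps / (3 * L)) <= eps).
  { destruct eps as [e ep]; simpl. unfold L in *.
    replace ((t2 - t1) * (e / (3 * (t2 - t1 + 1))) + 2 * (e / (3 * (t2 - t1 + 1))))
      with (e * ((t2 - t1 + 2) / (3 * (t2 - t1 + 1)))) by (field; lra).
    assert ((t2 - t1 + 2) / (3 * (t2 - t1 + 1)) <= 1).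
    { apply (Rmult_le_reg_r (3 * (t2 - t1 + 1))). lra. unfold Rdiv. rewrite Rmult_assoc, Rinv_l; lra. }
    nra. }
  assert (Hrho : (t2 - t1) * (int_R h - RInt h (- N) N) <= (t2 - t1) * (eps / (3 * L)))
    by (apply Rmult_le_compat_l; lra).
  lra.
Qed.

Definition utf (u0 u1 u2 u3 ph dph : R -> R) (a nu x : R) :=
  u2 x + a * u1 x + a * dph x - dph x * u0 x - ph x * u1 x - u0 x * u1 x - nu * u3 x.

Definition Ff (u0 u1 u2 W0 W1 W2 ph : R -> R) (a nu x : R) :=
  2 * u0 x * W0 x * u1 x - u0 x ^ 2 * W1 x + a * u0 x ^ 2 * W0 x - u0 x ^ 2 * ph x * W0 x
  - 2 / 3 * u0 x ^ 3 * W0 x - 2 * nu * u0 x * u2 x * W0 x + nu * u1 x ^ 2 * W0 x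
  + 2 * nu * u0 x * u1 x * W1 x - nu * u0 x ^ 2 * W2 x.

Definition Jf (u0 u1 W0 W1 W2 W3 ph dph : R -> R) (a nu x : R) :=
  - 2 * u1 x ^ 2 * W0 x + u0 x ^ 2 * W2 x - a * u0 x ^ 2 * W1 x + 2 * a * dph x * u0 x * W0 x
  - dph x * u0 x ^ 2 * W0 x + u0 x ^ 2 * ph x * W1 x + 2 / 3 * u0 x ^ 3 * W1 x
  - 3 * nu * u1 x ^ 2 * W1 x + nu * u0 x ^ 2 * W3 x.

Lemma F_deriv (u0 u1 u2 u3 W0 W1 W2 W3 ph dph : R -> R) (a nu x : R) :
  is_derive u0 x (u1 x) -> is_derive u1 x (u2 x) -> is_derive u2 x (u3 x) ->
  is_derive W0 x (W1 x) -> is_derive W1 x (W2 x) -> is_derive W2 x (W3 x) ->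
  is_derive ph x (dph x) ->
  is_derive (Ff u0 u1 u2 W0 W1 W2 ph a nu) x
    (2 * u0 x * W0 x * utf u0 u1 u2 u3 ph dph a nu x - Jf u0 u1 W0 W1 W2 W3 ph dph a nu x).
Proof.
  intros H0 H1 H2 G0 G1 G2 P.
  unfold Ff, utf, Jf.
  auto_derive.
  - repeat split; eexists; eauto.
  - assert (E0 : Derive (fun y => u0 y) x = u1 x) by (apply is_derive_unique; exact H0).
    assert (E1 : Derive (fun y => u1 y) x = u2 x) by (apply is_derive_unique; exact H1).
    assert (E2 : Derive (fun y => u2 y) x = u3 x) by (apply is_derive_unique; exact H2).
    assert (E3 : Derive (fun y => W0 y) x = W1 x) by (apply is_derive_unique; exact G0).
    assert (E4 : Derive (fun y => W1 y) x = W2 x) by (apply is_derive_unique; exact G1).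
    assert (E5 : Derive (fun y => W2 y) x = W3 x) by (apply is_derive_unique; exact G2).
    assert (E6 : Derive (fun y => ph y) x = dph x) by (apply is_derive_unique; exact P).
    rewrite E0, E1, E2, E3, E4, E5, E6.
    simpl. field.
Qed.

Definition W0 (x : R) := sqrt (1 + x ^ 2).
Definition W1 (x : R) := x / W0 x.
Definition W2 (x : R) := / (W0 x ^ 3).
Definition W3 (x : R) := - 3 * x / (W0 x ^ 5).

Lemma W0_sq x : W0 x ^ 2 = 1 + x ^ 2.
Proof. unfold W0. rewrite <- Rsqr_pow2, Rsqr_sqrt; auto. nra. Qed.
Lemma W0_ge1 x : 1 <= W0 x.
Proof. unfold W0. apply Rle_trans with (sqrt 1). rewrite sqrt_1; lra. apply sqrt_le_1_alt. nra. Qed.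
Lemma W0_pos x : 0 < W0 x.
Proof. pose proof (W0_ge1 x); lra. Qed.
Lemma W0_le x : W0 x <= 1 + Rabs x.
Proof.
  pose proof (W0_sq x). pose proof (W0_pos x). pose proof (Rabs_pos x).
  assert (Hx : x ^ 2 = Rabs x ^ 2) by (rewrite <- Rsqr_pow2, <- Rsqr_pow2, Rsqr_abs; auto).
  nra.
Qed.
Lemma W0_ge_abs x : Rabs x <= W0 x.
Proof.
  pose proof (W0_sq x). pose proof (W0_pos x). pose proof (Rabs_pos x).
  assert (Hx : x ^ 2 = Rabs x ^ 2) by (rewrite <- Rsqr_pow2, <- Rsqr_pow2, Rsqr_abs; auto).
  nra.
Qed.

Lemma W0_deriv x : is_derive W0 x (W1 x).
Proof.
  unfold W1, W0. auto_derive. nra. replace (1 + x * (x * 1)) with (1 + x ^ 2) by ring. field.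
  apply Rgt_not_eq. apply sqrt_lt_R0. nra.
Qed.

Lemma W1_deriv x : is_derive W1 x (W2 x).
Proof.
  unfold W2, W1.
  assert (H := W0_deriv x). pose proof (W0_pos x) as Hp. pose proof (W0_sq x) as Hsq.
  auto_derive.
  - split. exists (W1 x); exact H. split; [lra|auto].
  - assert (E : Derive (fun y => W0 y) x = W1 x) by (apply is_derive_unique; exact H).
    rewrite E. unfold W1.
    replace (/ W0 x ^ 3) with ((W0 x ^ 2 - x ^ 2) / W0 x ^ 3) by (rewrite Hsq; field; lra).
    field. lra.
Qed.

Lemma W2_deriv x : is_derive W2 x (W3 x).
Proof.
  unfold W3, W2.
  assert (H := W0_deriv x). pose proof (W0_pos x) as Hp. pose proof (W0_sq x) as Hsq.
  auto_derive.
  - split. exists (W1 x); exact H. split; [assert (0 < W0 x * (W0 x * (W0 x * 1))) by (repeat apply Rmult_lt_0_compat; lra); lra|auto].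
  - assert (E : Derive (fun y => W0 y) x = W1 x) by (apply is_derive_unique; exact H).
    rewrite E. unfold W1. field. lra.
Qed.

Lemma k1_W x : k1 x = / W0 x ^ 2.
Proof. unfold k1. rewrite W0_sq. reflexivity. Qed.

Lemma W1_abs x : Rabs (W1 x) <= 1.
Proof.
  unfold W1. pose proof (W0_ge_abs x). pose proof (W0_pos x).
  rewrite Rabs_div by lra. rewrite (Rabs_right (W0 x)) by lra.
  apply (Rmult_le_reg_r (W0 x)); auto. unfold Rdiv. rewrite Rmult_assoc, Rinv_l; lra.
Qed.

Lemma W1_sq x : W1 x ^ 2 = 1 - k1 x.
Proof.
  rewrite k1_W. unfold W1. pose proof (W0_pos x). pose proof (W0_sq x).
  replace (1 - / W0 x ^ 2) with ((W0 x ^ 2 - 1) / W0 x ^ 2) by (field; lra).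
  replace (W0 x ^ 2 - 1) with (x ^ 2) by lra. field. lra.
Qed.

Lemma W2_bnd x : 0 <= W2 x <= k1 x.
Proof.
  rewrite k1_W. unfold W2. pose proof (W0_ge1 x).
  split. left. apply Rinv_0_lt_compat. apply pow_lt; lra.
  apply Rinv_le_contravar. apply pow_lt; lra.
  replace (W0 x ^ 3) with (W0 x ^ 2 * W0 x) by ring.
  assert (0 < W0 x ^ 2) by (apply pow_lt; lra). nra.
Qed.

Lemma W3_bnd x : Rabs (W3 x) <= 3 * k1 x.
Proof.
  rewrite k1_W. unfold W3. pose proof (W0_ge1 x). pose proof (W0_ge_abs x).
  assert (P2 : 0 < W0 x ^ 2) by (apply pow_lt; lra).
  assert (P5 : 0 < W0 x ^ 5) by (apply pow_lt; lra).
  rewrite Rabs_div by lra. rewrite (Rabs_right (W0 x ^ 5)) by lra.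
  assert (E : Rabs (- 3 * x) = 3 * Rabs x) by (rewrite Rabs_mult; f_equal; unfold Rabs; destruct Rcase_abs; lra).
  rewrite E.
  apply (Rmult_le_reg_r (W0 x ^ 5)); auto. unfold Rdiv. rewrite Rmult_assoc, Rinv_l by lra.
  replace (3 * / W0 x ^ 2 * W0 x ^ 5) with (3 * W0 x ^ 3) by (field; lra).
  assert (W0 x <= W0 x ^ 3) by (replace (W0 x ^ 3) with (W0 x * W0 x ^ 2) by ring; nra).
  lra.
Qed.

Lemma k1_le1 x : k1 x <= 1.
Proof. unfold k1. rewrite <- Rinv_1. apply Rinv_le_contravar; [lra|]. nra. Qed.

Lemma cts_W0 : cts W0.
Proof. apply (cts_of_derive W0 W1). apply W0_deriv. Qed.
Lemma cts_W1 : cts W1.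
Proof. apply (cts_of_derive W1 W2). apply W1_deriv. Qed.
Lemma cts_W2 : cts W2.
Proof. apply (cts_of_derive W2 W3). apply W2_deriv. Qed.
Lemma cts_W3 : cts W3.
Proof.
  apply cts_of_ex_derive. intro x. unfold W3.
  pose proof (W0_pos x). auto_derive. split. exists (W1 x). apply W0_deriv.
  split; [assert (0 < W0 x * (W0 x * (W0 x * (W0 x * (W0 x * 1))))) by (repeat apply Rmult_lt_0_compat; lra); lra|auto].
Qed.

Lemma lim_p_extract f (l : R) : is_lim f p_infty l ->
  forall eps : posreal, exists M, forall x, M < x -> Rabs (f x - l) < eps.
Proof.
  intros H eps. assert (Hl : Rbar_locally l (ball l eps)) by (exists eps; auto).
  destruct (H _ Hl) as [M HM]. exists M. intros x Hx. apply ball_R. apply HM; auto.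
Qed.

Lemma lim_m_extract f (l : R) : is_lim f m_infty l ->
  forall eps : posreal, exists M, forall x, x < M -> Rabs (f x - l) < eps.
Proof.
  intros H eps. assert (Hl : Rbar_locally l (ball l eps)) by (exists eps; auto).
  destruct (H _ Hl) as [M HM]. exists M. intros x Hx. apply ball_R. apply HM; auto.
Qed.

Lemma cts_bounded_ab f a b : cts f -> a <= b -> exists B, forall x, a <= x <= b -> Rabs (f x) <= B.
Proof.
  intros Hf Hab.
  destruct (continuity_ab_maj (fun x => Rabs (f x)) a b Hab) as [m [Hm _]].
  intros c _. apply continuity_pt_filterlim. apply cts_abs; auto.
  exists (Rabs (f m)). auto.
Qed.

Lemma phi_facts (ph : R -> R) : cts ph -> is_lim ph m_infty 1 -> is_lim ph p_infty (-1) ->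
  exists R1 B, 0 < R1 /\ 0 <= B /\ (forall x, Rabs (ph x) <= B) /\
    (forall x, R1 < x -> ph x <= - 7/8) /\ (forall x, x < - R1 -> 7/8 <= ph x).
Proof.
  intros Hc Hm Hp.
  assert (He : 0 < 1/8) by lra.
  destruct (lim_p_extract ph _ Hp (mkposreal _ He)) as [M1 H1].
  destruct (lim_m_extract ph _ Hm (mkposreal _ He)) as [M2 H2]. simpl in *.
  set (R1 := Rabs M1 + Rabs M2 + 1).
  pose proof (Rabs_big M1). pose proof (Rabs_big M2).
  destruct (cts_bounded_ab ph (-R1) R1 Hc) as [B HB]. unfold R1; lra.
  exists R1, (Rabs B + 2). repeat split.
  - unfold R1; lra.
  - pose proof (Rabs_big B); lra.
  - intro x. pose proof (Rabs_big B).
    destruct (Rle_dec x R1); destruct (Rle_dec (-R1) x).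
    + specialize (HB x ltac:(lra)). lra.
    + specialize (H2 x ltac:(unfold R1 in *; lra)). apply Rabs_lt_elim in H2. apply Rabs_le_intro; lra.
    + specialize (H1 x ltac:(unfold R1 in *; lra)). apply Rabs_lt_elim in H1. apply Rabs_le_intro; lra.
    + specialize (H1 x ltac:(unfold R1 in *; lra)). apply Rabs_lt_elim in H1. apply Rabs_le_intro; lra.
  - intros x Hx. specialize (H1 x ltac:(unfold R1 in *; lra)). apply Rabs_lt_elim in H1. lra.
  - intros x Hx. specialize (H2 x ltac:(unfold R1 in *; lra)). apply Rabs_lt_elim in H2. lra.
Qed.

Lemma c_bound (ph : R -> R) (nu R1 B : R) : 0 < R1 -> 0 <= B -> (forall x, Rabs (ph x) <= B) ->
    (forall x, R1 < x -> ph x <= - 7/8) -> (forall x, x < - R1 -> 7/8 <= ph x) ->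
  forall x, W2 x + ph x * W1 x + nu * W3 x <=
     - 1/2 + ((2 + B + 3 * Rabs nu) * (1 + R1 ^ 2) + 15/8 + 3 * Rabs nu) * k1 x.
Proof.
  intros HR HB Hb Hp Hm x.
  pose proof (W2_bnd x). pose proof (W3_bnd x). pose proof (W1_abs x). pose proof (W1_sq x).
  pose proof (k1_ge0 x). pose proof (k1_le1 x). pose proof (Rabs_big nu).
  assert (Hnu : nu * W3 x <= 3 * Rabs nu * k1 x).
  { eapply Rle_trans. apply RRle_abs. rewrite Rabs_mult.
    replace (3 * Rabs nu * k1 x) with (Rabs nu * (3 * k1 x)) by ring.
    apply Rmult_le_compat_l; lra. }
  set (D0 := (2 + B + 3 * Rabs nu) * (1 + R1 ^ 2)).
  assert (HD0 : 0 <= D0) by (unfold D0; apply Rmult_le_pos; [lra| nra]).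
  destruct (Rlt_dec R1 x) as [Hx|Hx]; [|destruct (Rlt_dec x (- R1)) as [Hx'|Hx']].
  - specialize (Hp x Hx).
    assert (W1p : 0 <= W1 x) by (unfold W1; apply Rdiv_le_0_compat; [lra| apply W0_pos]).
    assert (W1 x >= 1 - k1 x) by nra.
    assert (ph x * W1 x <= - 7/8 * (1 - k1 x)) by nra.
    assert (0 <= D0 * k1 x) by nra. nra.
  - specialize (Hm x Hx').
    assert (W1n : W1 x <= 0).
    { unfold W1. unfold Rdiv. pose proof (W0_pos x). assert (0 < / W0 x) by (apply Rinv_0_lt_compat; lra). nra. }
    assert (W1 x <= - (1 - k1 x)) by nra.
    assert (ph x * W1 x <= - 7/8 * (1 - k1 x)) by nra.
    assert (0 <= D0 * k1 x) by nra. nra.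
  - assert (Hk : 1 <= (1 + R1 ^ 2) * k1 x).
    { unfold k1. assert (x ^ 2 <= R1 ^ 2) by nra. pose proof (k1_pos x).
      apply (Rmult_le_reg_r (1 + x ^ 2)); auto. rewrite Rmult_assoc, Rinv_l; lra. }
    assert (Rabs (ph x) * Rabs (W1 x) <= B * 1) by (apply Rmult_le_compat; auto using Rabs_pos).
    assert (ph x * W1 x <= B) by (eapply Rle_trans; [apply RRle_abs|]; rewrite Rabs_mult; lra).
    assert ((2 + B + 3 * Rabs nu) <= D0 * k1 x) by (unfold D0; nra).
    nra.
Qed.

Definition q (x : R) := / (1 + Rabs x) ^ 2.

Lemma q_facts x : 0 < q x /\ q x <= 1 /\ q x <= k1 x /\ q x * (1 + Rabs x) <= 1 /\
   q x * (1 + Rabs x) = / (1 + Rabs x).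
Proof.
  pose proof (Rabs_pos x) as Ha.
  assert (Hp : 0 < (1 + Rabs x) ^ 2) by (apply pow_lt; lra).
  assert (Hx : x ^ 2 = Rabs x ^ 2) by (rewrite <- Rsqr_pow2, <- Rsqr_pow2, Rsqr_abs; auto).
  unfold q, k1. repeat split.
  - apply Rinv_0_lt_compat; auto.
  - rewrite <- Rinv_1. apply Rinv_le_contravar; [lra|]. nra.
  - apply Rinv_le_contravar. apply k1_pos. nra.
  - replace (/ (1 + Rabs x) ^ 2 * (1 + Rabs x)) with (/ (1 + Rabs x)) by (field; lra).
    rewrite <- Rinv_1. apply Rinv_le_contravar; lra.
  - field; lra.
Qed.

Lemma cts_q : cts q.
Proof.
  intro x. unfold q. apply continuity_pt_filterlim.
  apply continuity_pt_inv.
  - apply continuity_pt_filterlim. apply (cts_pow2 (fun x => 1 + Rabs x)).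
    apply cts_plus. apply cts_const. apply cts_abs. apply cts_id.
  - pose proof (Rabs_pos x). apply pow_nonzero. lra.
Qed.

Lemma inv_small (C : R) : 0 <= C -> forall eps : posreal, exists N, forall x, N < Rabs x -> C / (1 + Rabs x) < eps.
Proof.
  intros HC eps. exists (C / eps). intros x Hx.
  destruct eps as [e ep]; simpl in *. pose proof (Rabs_pos x).
  apply (Rmult_lt_reg_r (1 + Rabs x)). lra. unfold Rdiv. rewrite Rmult_assoc, Rinv_l by lra.
  unfold Rdiv in Hx. apply (Rmult_lt_compat_r e) in Hx; auto.
  rewrite Rmult_assoc, Rinv_l in Hx by lra. nra.
Qed.

Definition Bdd (f : R -> R) := cts f /\ exists B, forall x, Rabs (f x) <= B.
Definition Dom2 (f : R -> R) := cts f /\ exists C, 0 <= C /\ forall x, Rabs (f x) <= C * q x.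

Lemma Bdd_pos f : Bdd f -> exists B, 0 <= B /\ forall x, Rabs (f x) <= B.
Proof. intros [_ [B HB]]. exists B. split; auto. pose proof (HB 0). pose proof (Rabs_pos (f 0)). lra. Qed.

Lemma Dom2_ext f g : (forall x, f x = g x) -> Dom2 f -> Dom2 g.
Proof.
  intros E [Hc [C [HC HB]]]. split.
  - intro x. apply (continuous_ext f). auto. apply Hc.
  - exists C. split; auto. intro x. rewrite <- E. auto.
Qed.

Lemma Dom2_plus f g : Dom2 f -> Dom2 g -> Dom2 (fun x => f x + g x).
Proof.
  intros [Hf [C1 [H1 B1]]] [Hg [C2 [H2 B2]]]. split. apply cts_plus; auto.
  exists (C1 + C2). split. lra. intro x. eapply Rle_trans. apply Rabs_triang.
  specialize (B1 x). specialize (B2 x). lra.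
Qed.

Lemma Dom2_scal c f : Dom2 f -> Dom2 (fun x => c * f x).
Proof.
  intros [Hf [C1 [H1 B1]]]. split. apply cts_scal; auto.
  exists (Rabs c * C1). split. apply Rmult_le_pos; auto; apply Rabs_pos.
  intro x. rewrite Rabs_mult, Rmult_assoc. apply Rmult_le_compat_l. apply Rabs_pos. auto.
Qed.

Lemma Dom2_minus f g : Dom2 f -> Dom2 g -> Dom2 (fun x => f x - g x).
Proof.
  intros Hf Hg. apply (Dom2_ext (fun x => f x + (-1) * g x)). intro; ring.
  apply Dom2_plus; auto. apply Dom2_scal; auto.
Qed.

Lemma Dom2_mulB f g : Dom2 f -> Bdd g -> Dom2 (fun x => f x * g x).
Proof.
  intros [Hf [C1 [H1 B1]]] Hg. destruct (Bdd_pos g Hg) as [B [HB B2]]. destruct Hg as [Hg _].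
  split. apply cts_mult; auto.
  exists (C1 * B). split. apply Rmult_le_pos; auto.
  intro x. rewrite Rabs_mult. specialize (B1 x). specialize (B2 x).
  pose proof (q_facts x). pose proof (Rabs_pos (f x)). pose proof (Rabs_pos (g x)).
  replace (C1 * B * q x) with ((C1 * q x) * B) by ring.
  apply Rmult_le_compat; auto.
Qed.

Lemma Dom2_Bdd f : Dom2 f -> Bdd f.
Proof.
  intros [Hf [C1 [H1 B1]]]. split; auto. exists C1. intro x. specialize (B1 x).
  pose proof (q_facts x). nra.
Qed.

Lemma Bdd_mult f g : Bdd f -> Bdd g -> Bdd (fun x => f x * g x).
Proof.
  intros Hf Hg. destruct (Bdd_pos f Hf) as [B1 [H1 C1]]. destruct (Bdd_pos g Hg) as [B2 [H2 C2]].
  split. apply cts_mult; [apply Hf|apply Hg].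
  exists (B1 * B2). intro x. rewrite Rabs_mult. apply Rmult_le_compat; auto using Rabs_pos.
Qed.

Lemma Bdd_const c : Bdd (fun _ => c).
Proof. split. apply cts_const. exists (Rabs c). intros; lra. Qed.

Lemma Dom2_mulW f g : Dom2 f -> Dom2 g -> Dom2 (fun x => f x * g x * W0 x).
Proof.
  intros [Hf [C1 [H1 B1]]] [Hg [C2 [H2 B2]]].
  split. apply cts_mult. apply cts_mult; auto. apply cts_W0.
  exists (C1 * C2). split. apply Rmult_le_pos; auto.
  intro x. rewrite !Rabs_mult. specialize (B1 x). specialize (B2 x).
  destruct (q_facts x) as [q1 [q2 [q3 [q4 q5]]]].
  pose proof (W0_le x). pose proof (W0_pos x). rewrite (Rabs_right (W0 x)) by lra.
  pose proof (Rabs_pos (f x)). pose proof (Rabs_pos (g x)).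
  apply Rle_trans with ((C1 * q x) * (C2 * q x) * (1 + Rabs x)).
  apply Rmult_le_compat; try apply Rmult_le_compat; auto; try lra; apply Rmult_le_pos; auto.
  replace (C1 * q x * (C2 * q x) * (1 + Rabs x)) with (C1 * C2 * q x * (q x * (1 + Rabs x))) by ring.
  assert (0 <= C1 * C2 * q x) by (apply Rmult_le_pos; [apply Rmult_le_pos|]; lra).
  nra.
Qed.

Lemma Dom2_integrable f : Dom2 f -> integrable_R f.
Proof.
  intros [Hf [C [HC B]]].
  apply (integrable_cmp f (fun x => C * k1 x)); auto. apply cts_scal, cts_k1.
  intro x. specialize (B x). pose proof (q_facts x). nra.
  apply int_scal. apply cts_k1. apply integrable_k1.
Qed.

Lemma Dom2_vanish f : Dom2 f -> vanish (fun x => f x * W0 x).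
Proof.
  intros [Hf [C [HC B]]] eps. destruct (inv_small C HC eps) as [N HN]. exists N. intros x Hx.
  eapply Rle_lt_trans; [|apply HN; auto].
  rewrite Rabs_mult. specialize (B x).
  destruct (q_facts x) as [q1 [q2 [q3 [q4 q5]]]].
  pose proof (W0_le x). pose proof (W0_pos x). rewrite (Rabs_right (W0 x)) by lra.
  unfold Rdiv. rewrite <- q5.
  pose proof (Rabs_pos (f x)).
  replace (C * (q x * (1 + Rabs x))) with ((C * q x) * (1 + Rabs x)) by ring.
  apply Rmult_le_compat; auto; try lra.
  exact Hx.
Qed.

Lemma vanish_plus f g : vanish f -> vanish g -> vanish (fun x => f x + g x).
Proof.
  intros Hf Hg eps. assert (He : 0 < eps / 2) by (destruct eps; simpl; lra).
  destruct (Hf (mkposreal _ He)) as [N1 H1]. destruct (Hg (mkposreal _ He)) as [N2 H2].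
  simpl in *. exists (Rmax N1 N2). intros x Hx.
  pose proof (Rmax_l N1 N2). pose proof (Rmax_r N1 N2).
  eapply Rle_lt_trans. apply Rabs_triang.
  specialize (H1 x ltac:(lra)). specialize (H2 x ltac:(lra)). lra.
Qed.

Lemma vanish_ext f g : (forall x, f x = g x) -> vanish f -> vanish g.
Proof. intros E H eps. destruct (H eps) as [N HN]. exists N. intros. rewrite <- E. auto. Qed.

Lemma Dom2_vanish0 f : Dom2 f -> vanish f.
Proof.
  intros Hf. apply (vanish_ext (fun x => (f x * / W0 x) * W0 x)).
  intro x. field. pose proof (W0_pos x); lra.
  apply Dom2_vanish. apply Dom2_mulB; auto.
  split. intro x. apply continuity_pt_filterlim. apply continuity_pt_inv.
  apply continuity_pt_filterlim, cts_W0. pose proof (W0_pos x); lra.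
  exists 1. intro x. pose proof (W0_ge1 x). rewrite Rabs_right.
  rewrite <- Rinv_1. apply Rinv_le_contravar; lra.
  apply Rle_ge. left. apply Rinv_0_lt_compat. lra.
Qed.

Lemma Dom2_of_decay f M : cts f -> (forall x, (1 + Rabs x) ^ 2 * Rabs (f x) <= M) -> Dom2 f.
Proof.
  intros Hf H. split; auto. exists M. split.
  - specialize (H 0). pose proof (Rabs_pos (f 0)). pose proof (Rabs_pos 0). nra.
  - intro x. specialize (H x). unfold q. pose proof (Rabs_pos x).
    assert (Hp : 0 < (1 + Rabs x) ^ 2) by (apply pow_lt; lra).
    apply (Rmult_le_reg_l ((1 + Rabs x) ^ 2)); auto.
    replace ((1 + Rabs x) ^ 2 * (M * / (1 + Rabs x) ^ 2)) with M by (field; lra). auto.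
Qed.

Definition hp (dph : R -> R) (x : R) := (1 + Rabs x) * Rabs (dph x).
Definition DomH (dph : R -> R) (f : R -> R) :=
  cts f /\ exists C, 0 <= C /\ forall x, Rabs (f x) <= C * (k1 x + hp dph x).

Lemma hp_ge0 dph x : 0 <= hp dph x.
Proof. unfold hp. apply Rmult_le_pos. pose proof (Rabs_pos x); lra. apply Rabs_pos. Qed.

Lemma DomH_ext dph f g : (forall x, f x = g x) -> DomH dph f -> DomH dph g.
Proof.
  intros E [Hc [C [HC HB]]]. split.
  - intro x. apply (continuous_ext f). auto. apply Hc.
  - exists C. split; auto. intro x. rewrite <- E. auto.
Qed.

Lemma DomH_plus dph f g : DomH dph f -> DomH dph g -> DomH dph (fun x => f x + g x).
Proof.
  intros [Hf [C1 [H1 B1]]] [Hg [C2 [H2 B2]]]. split. apply cts_plus; auto.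
  exists (C1 + C2). split. lra. intro x. eapply Rle_trans. apply Rabs_triang.
  specialize (B1 x). specialize (B2 x). lra.
Qed.

Lemma DomH_scal dph c f : DomH dph f -> DomH dph (fun x => c * f x).
Proof.
  intros [Hf [C1 [H1 B1]]]. split. apply cts_scal; auto.
  exists (Rabs c * C1). split. apply Rmult_le_pos; auto; apply Rabs_pos.
  intro x. rewrite Rabs_mult, Rmult_assoc. apply Rmult_le_compat_l. apply Rabs_pos. auto.
Qed.

Lemma DomH_minus dph f g : DomH dph f -> DomH dph g -> DomH dph (fun x => f x - g x).
Proof.
  intros Hf Hg. apply (DomH_ext dph (fun x => f x + (-1) * g x)). intro; ring.
  apply DomH_plus; auto. apply DomH_scal; auto.
Qed.

Lemma DomH_of_Dom2 dph f : Dom2 f -> DomH dph f.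
Proof.
  intros [Hf [C [HC B]]]. split; auto. exists C. split; auto. intro x.
  specialize (B x). pose proof (q_facts x). pose proof (hp_ge0 dph x). nra.
Qed.

Lemma DomH_dph dph g : cts dph -> Dom2 g -> DomH dph (fun x => dph x * g x * W0 x).
Proof.
  intros Hd [Hg [C [HC B]]]. split.
  apply cts_mult. apply cts_mult; auto. apply cts_W0.
  exists C. split; auto. intro x. specialize (B x).
  destruct (q_facts x) as [q1 [q2 [q3 [q4 q5]]]].
  pose proof (W0_le x). pose proof (W0_pos x). pose proof (Rabs_pos (dph x)). pose proof (Rabs_pos (g x)).
  pose proof (k1_ge0 x).
  rewrite !Rabs_mult. rewrite (Rabs_right (W0 x)) by lra.
  apply Rle_trans with (C * hp dph x); [| nra].
  unfold hp.
  apply Rle_trans with (Rabs (dph x) * (C * q x) * (1 + Rabs x)).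
  apply Rmult_le_compat; try lra. apply Rmult_le_pos; auto. apply Rmult_le_compat_l; auto.
  replace (Rabs (dph x) * (C * q x) * (1 + Rabs x)) with (C * (q x * (1 + Rabs x)) * Rabs (dph x)) by ring.
  replace (C * ((1 + Rabs x) * Rabs (dph x))) with (C * (1 + Rabs x) * Rabs (dph x)) by ring.
  apply Rmult_le_compat_r; auto. apply Rmult_le_compat_l; auto. pose proof (Rabs_pos x). nra.
Qed.

Lemma DomH_integrable dph f : cts dph -> integrable_R (hp dph) -> DomH dph f -> integrable_R f.
Proof.
  intros Hd Ih [Hf [C [HC B]]].
  assert (Chp : cts (hp dph)) by (unfold hp; apply cts_mult; [apply cts_plus; [apply cts_const| apply cts_abs, cts_id] | apply cts_abs; auto]).
  apply (integrable_cmp f (fun x => C * (k1 x + hp dph x))); auto.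
  apply cts_scal, cts_plus; auto; apply cts_k1.
  apply int_scal. apply cts_plus; auto; apply cts_k1.
  apply int_plus; auto. apply cts_k1. apply integrable_k1.
Qed.

Definition K0f (D Phi A0sq : R) := 4 * D + 2 * Phi + 5/3 * A0sq.
Definition K1f (D Phi A0sq nu : R) := 3 * Rabs nu + 12 * K0f D Phi A0sq * (K0f D Phi A0sq + 1).
Definition K2f (Phi A0sq : R) := 5/2 * A0sq + Phi.
Definition etf (D Phi A0sq : R) := / (12 * (K0f D Phi A0sq + 1)).

Lemma final_alg (nu a A2 B S2 S D Phi Phi' Ik A0sq : R) :
  0 <= A2 <= A0sq -> 0 <= B -> 0 <= D -> 0 <= Phi' <= Phi -> 0 <= Ik <= 4 -> 0 <= S -> S ^ 2 = S2 ->
  S2 = etf D Phi A0sq * A2 + / etf D Phi A0sq * B ->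
  3 * Rabs nu * B + (-1/2 + Rabs a + 2/3 * S) * A2 + D * S2 * Ik + (a ^ 2 + 2 * S2) * Phi'
  <= -1/4 * A2 + K1f D Phi A0sq nu * B + K2f Phi A0sq * a ^ 2.
Proof.
  intros HA HB HD HP HI HS HS2 HS2'.
  unfold K1f, K2f. unfold etf in HS2'. set (K0 := K0f D Phi A0sq) in *.
  assert (HK0 : 0 <= K0) by (unfold K0, K0f; lra).
  assert (Ha : Rabs a <= 1/10 + 5/2 * a ^ 2).
  { assert (a ^ 2 = Rabs a ^ 2) by (rewrite <- Rsqr_pow2, <- Rsqr_pow2, Rsqr_abs; auto).
    pose proof (Rabs_pos a). assert (0 <= (Rabs a - 1/5) ^ 2) by apply pow2_ge_0. nra. }
  assert (HSa : S <= 1/10 + 5/2 * S2).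
  { rewrite <- HS2. assert (0 <= (S - 1/5) ^ 2) by apply pow2_ge_0. nra. }
  assert (T1 : Rabs a * A2 <= 1/10 * A2 + 5/2 * a ^ 2 * A0sq).
  { apply Rle_trans with ((1/10 + 5/2 * a ^ 2) * A2). apply Rmult_le_compat_r; lra.
    assert (0 <= a ^ 2) by nra. nra. }
  assert (HS20 : 0 <= S2) by nra.
  assert (T2 : 2/3 * S * A2 <= 1/15 * A2 + 5/3 * S2 * A0sq).
  { apply Rle_trans with (2/3 * (1/10 + 5/2 * S2) * A2). apply Rmult_le_compat_r; lra. nra. }
  assert (T3 : D * S2 * Ik <= 4 * D * S2).
  { assert (0 <= D * S2) by nra. nra. }
  assert (T4 : (a ^ 2 + 2 * S2) * Phi' <= a ^ 2 * Phi + 2 * S2 * Phi).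
  { assert (0 <= a ^ 2) by nra. nra. }
  assert (T5 : (4 * D + 2 * Phi + 5/3 * A0sq) * S2 <= 1/12 * A2 + 12 * K0 * (K0 + 1) * B).
  { replace (4 * D + 2 * Phi + 5 / 3 * A0sq) with K0 by reflexivity.
    rewrite HS2'. rewrite Rinv_inv.
    assert (E : K0 * / (12 * (K0 + 1)) <= 1/12).
    { apply (Rmult_le_reg_r (12 * (K0 + 1))). lra. rewrite Rmult_assoc, Rinv_l; lra. }
    assert (0 <= A2) by lra.
    replace (K0 * (/ (12 * (K0 + 1)) * A2 + 12 * (K0 + 1) * B))
      with ((K0 * / (12 * (K0 + 1))) * A2 + 12 * K0 * (K0 + 1) * B) by ring.
    nra. }
  assert (0 <= a ^ 2 * A0sq) by (apply Rmult_le_pos; nra).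
  nra.
Qed.

Lemma int_ext f g : (forall x, f x = g x) -> int_R f = int_R g.
Proof. intros H. f_equal. apply functional_extensionality. auto. Qed.
Lemma integrable_ext f g : (forall x, f x = g x) -> integrable_R f -> integrable_R g.
Proof. intros H. replace g with f; auto. apply functional_extensionality. auto. Qed.

Lemma Bdd_W1 : Bdd W1. Proof. split. apply cts_W1. exists 1. apply W1_abs. Qed.
Lemma Bdd_W2 : Bdd W2. Proof. split. apply cts_W2. exists 1. intro x. pose proof (W2_bnd x). pose proof (k1_le1 x). rewrite Rabs_right; lra. Qed.
Lemma Bdd_W3 : Bdd W3. Proof. split. apply cts_W3. exists 3. intro x. pose proof (W3_bnd x). pose proof (k1_le1 x). lra. Qed.

Lemma Dom2_opp f : Dom2 f -> Dom2 (fun x => - f x).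
Proof. intros H. apply (Dom2_ext (fun x => (-1) * f x)). intro; ring. apply Dom2_scal; auto. Qed.

Lemma int_lin4 f1 f2 f3 f4 c1 c2 c3 c4 : cts f1 -> cts f2 -> cts f3 -> cts f4 ->
  integrable_R f1 -> integrable_R f2 -> integrable_R f3 -> integrable_R f4 ->
  integrable_R (fun x => c1 * f1 x + c2 * f2 x + c3 * f3 x + c4 * f4 x) /\
  int_R (fun x => c1 * f1 x + c2 * f2 x + c3 * f3 x + c4 * f4 x) =
    c1 * int_R f1 + c2 * int_R f2 + c3 * int_R f3 + c4 * int_R f4.
Proof.
  intros C1 C2 C3 C4 I1 I2 I3 I4.
  destruct (int_scal c1 f1 C1 I1) as [J1 E1].
  destruct (int_scal c2 f2 C2 I2) as [J2 E2].
  destruct (int_scal c3 f3 C3 I3) as [J3 E3].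
  destruct (int_scal c4 f4 C4 I4) as [J4 E4].
  destruct (int_plus _ _ (cts_scal c1 f1 C1) (cts_scal c2 f2 C2) J1 J2) as [J12 E12].
  destruct (int_plus _ _ (cts_plus _ _ (cts_scal c1 f1 C1) (cts_scal c2 f2 C2)) (cts_scal c3 f3 C3) J12 J3) as [J123 E123].
  destruct (int_plus _ _ (cts_plus _ _ (cts_plus _ _ (cts_scal c1 f1 C1) (cts_scal c2 f2 C2)) (cts_scal c3 f3 C3)) (cts_scal c4 f4 C4) J123 J4) as [J1234 E1234].
  split; auto. rewrite E1234, E123, E12, E1, E2, E3, E4. ring.
Qed.

Lemma Rabs_sq_le x S : 0 <= S -> x ^ 2 <= S ^ 2 -> Rabs x <= S.
Proof.
  intros HS H. assert (x ^ 2 = Rabs x ^ 2) by (rewrite <- Rsqr_pow2, <- Rsqr_pow2, Rsqr_abs; auto).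
  pose proof (Rabs_pos x). nra.
Qed.
Lemma pt_JP (u0 u1 w0 w1 w2 w3 ph dph a nu D S k : R) :
  0 < w0 -> Rabs w1 <= 1 -> w2 + ph * w1 + nu * w3 <= -1/2 + D * k -> 0 <= k -> 0 <= D ->
  0 <= S -> u0 ^ 2 <= S ^ 2 ->
  - 2 * u1 ^ 2 * w0 + u0 ^ 2 * w2 - a * u0 ^ 2 * w1 + 2 * a * dph * u0 * w0
  - dph * u0 ^ 2 * w0 + u0 ^ 2 * ph * w1 + 2 / 3 * u0 ^ 3 * w1
  - 3 * nu * u1 ^ 2 * w1 + nu * u0 ^ 2 * w3
  <= 3 * Rabs nu * u1 ^ 2 + (-1/2 + Rabs a + 2/3 * S) * u0 ^ 2 + D * S ^ 2 * k + (a ^ 2 + 2 * S ^ 2) * (Rabs dph * w0).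
Proof.
  intros Hw0 Hw1 Hc Hk HD HS Hu.
  assert (Hu0 : Rabs u0 <= S) by (apply Rabs_sq_le; auto).
  assert (Q0 : 0 <= u0 ^ 2) by apply pow2_ge_0.
  assert (Q1 : 0 <= u1 ^ 2) by apply pow2_ge_0.
  assert (T1 : u0 ^ 2 * (w2 + ph * w1 + nu * w3) <= -1/2 * u0 ^ 2 + D * S ^ 2 * k).
  { apply Rle_trans with (u0 ^ 2 * (-1/2 + D * k)). apply Rmult_le_compat_l; auto.
    assert (0 <= D * k) by nra. nra. }
  assert (T2 : - 2 * u1 ^ 2 * w0 <= 0) by nra.
  assert (T3 : - a * u0 ^ 2 * w1 <= Rabs a * u0 ^ 2).
  { eapply Rle_trans. apply RRle_abs. rewrite !Rabs_mult, Rabs_Ropp.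
    rewrite (Rabs_right (u0 ^ 2)) by lra. pose proof (Rabs_pos a).
    assert (Rabs a * u0 ^ 2 * Rabs w1 <= Rabs a * u0 ^ 2 * 1) by (apply Rmult_le_compat_l; [nra|lra]). lra. }
  assert (Hd0 : 0 <= Rabs dph) by apply Rabs_pos.
  assert (T4 : 2 * a * dph * u0 * w0 <= (a ^ 2 + S ^ 2) * (Rabs dph * w0)).
  { eapply Rle_trans. apply RRle_abs. rewrite !Rabs_mult. rewrite (Rabs_right 2) by lra.
    rewrite (Rabs_right w0) by lra.
    assert (2 * Rabs a * Rabs u0 <= a ^ 2 + S ^ 2).
    { assert (a ^ 2 = Rabs a ^ 2) by (rewrite <- Rsqr_pow2, <- Rsqr_pow2, Rsqr_abs; auto).
      pose proof (Rabs_pos a). pose proof (Rabs_pos u0).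
      assert (0 <= (Rabs a - Rabs u0) ^ 2) by apply pow2_ge_0. nra. }
    assert (0 <= Rabs dph * w0) by nra. nra. }
  assert (T5 : - dph * u0 ^ 2 * w0 <= S ^ 2 * (Rabs dph * w0)).
  { eapply Rle_trans. apply RRle_abs. rewrite !Rabs_mult, Rabs_Ropp.
    rewrite (Rabs_right (u0 ^ 2)) by lra. rewrite (Rabs_right w0) by lra.
    assert (0 <= Rabs dph * w0) by nra. nra. }
  assert (T6 : 2 / 3 * u0 ^ 3 * w1 <= 2/3 * S * u0 ^ 2).
  { eapply Rle_trans. apply RRle_abs. rewrite !Rabs_mult. rewrite (Rabs_right (2/3)) by lra.
    replace (u0 ^ 3) with (u0 * u0 ^ 2) by ring. rewrite Rabs_mult. rewrite (Rabs_right (u0 ^ 2)) by lra.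
    pose proof (Rabs_pos u0). pose proof (Rabs_pos w1).
    assert (Rabs u0 * u0 ^ 2 * Rabs w1 <= S * u0 ^ 2 * 1).
    { apply Rmult_le_compat; try nra. }
    nra. }
  assert (T7 : - 3 * nu * u1 ^ 2 * w1 <= 3 * Rabs nu * u1 ^ 2).
  { eapply Rle_trans. apply RRle_abs.
    replace (- 3 * nu * u1 ^ 2 * w1) with ((-3) * (nu * (u1 ^ 2 * w1))) by ring.
    rewrite !Rabs_mult. rewrite (Rabs_right (u1 ^ 2)) by lra.
    replace (Rabs (-3)) with 3 by (rewrite Rabs_left; lra).
    pose proof (Rabs_pos nu). pose proof (Rabs_pos w1).
    assert (Rabs nu * (u1 ^ 2 * Rabs w1) <= Rabs nu * (u1 ^ 2 * 1)).
    { apply Rmult_le_compat_l; auto. apply Rmult_le_compat_l; auto. }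
    nra. }
  nra.
Qed.

Lemma spatial (u0 u1 u2 u3 ph dph : R -> R) (a nu M Bp D Phi A0sq : R) :
  (forall x, is_derive u0 x (u1 x)) -> (forall x, is_derive u1 x (u2 x)) ->
  (forall x, is_derive u2 x (u3 x)) -> cts u3 ->
  (forall x, is_derive ph x (dph x)) -> cts dph -> (forall x, Rabs (ph x) <= Bp) ->
  (forall x, (1 + Rabs x) ^ 2 * Rabs (u0 x) <= M) ->
  (forall x, (1 + Rabs x) ^ 2 * Rabs (u1 x) <= M) ->
  (forall x, (1 + Rabs x) ^ 2 * Rabs (u2 x) <= M) ->
  (forall x, (1 + Rabs x) ^ 2 * Rabs (u3 x) <= M) ->
  0 <= D -> (forall x, W2 x + ph x * W1 x + nu * W3 x <= -1/2 + D * k1 x) ->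
  integrable_R (hp dph) -> int_R (fun x => Rabs (dph x) * W0 x) <= Phi ->
  L2sq u0 <= A0sq ->
  int_R (fun x => 2 * u0 x * W0 x * utf u0 u1 u2 u3 ph dph a nu x)
     <= -1/4 * L2sq u0 + K1f D Phi A0sq nu * L2sq u1 + K2f Phi A0sq * a ^ 2.
Proof.
  intros D0 D1 D2 C3 Dph Cdph Hph B0 B1 B2 B3 HD Hc Ihp HPhi HA.
  assert (C0 : cts u0) by (apply (cts_of_derive u0 u1); auto).
  assert (C1 : cts u1) by (apply (cts_of_derive u1 u2); auto).
  assert (C2 : cts u2) by (apply (cts_of_derive u2 u3); auto).
  assert (Cph : cts ph) by (apply (cts_of_derive ph dph); auto).
  assert (Chp : cts (hp dph)) by (unfold hp; apply cts_mult; [apply cts_plus; [apply cts_const| apply cts_abs, cts_id] | apply cts_abs; auto]).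
  assert (G0 : Dom2 u0) by (apply (Dom2_of_decay u0 M); auto).
  assert (G1 : Dom2 u1) by (apply (Dom2_of_decay u1 M); auto).
  assert (G2 : Dom2 u2) by (apply (Dom2_of_decay u2 M); auto).
  assert (G3 : Dom2 u3) by (apply (Dom2_of_decay u3 M); auto).
  assert (Bph : Bdd ph) by (split; auto; exists Bp; auto).
  assert (Bu0 : Bdd u0) by (apply Dom2_Bdd; auto).
  assert (Bu1 : Bdd u1) by (apply Dom2_Bdd; auto).
  set (ut := utf u0 u1 u2 u3 ph dph a nu).
  set (J := Jf u0 u1 W0 W1 W2 W3 ph dph a nu).
  set (E := fun x => 2 * u0 x * W0 x * ut x).
  assert (HE : DomH dph E).
  { apply (DomH_ext dph (fun x =>
       ((fun y => 2 * u0 y) x * (fun y => u2 y + a * u1 y - ph y * u1 y - u0 y * u1 y - nu * u3 y) x * W0 x)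
       + (a * (dph x * (fun y => 2 * u0 y) x * W0 x) - (dph x * (fun y => 2 * u0 y * u0 y) x * W0 x)))).
    { intro x. unfold E, ut, utf. ring. }
    apply DomH_plus. apply DomH_of_Dom2. apply Dom2_mulW. apply Dom2_scal; auto.
    apply Dom2_minus. apply Dom2_minus. apply Dom2_minus. apply Dom2_plus; auto. apply Dom2_scal; auto.
    apply (Dom2_ext (fun x => u1 x * ph x)). intro; ring. apply Dom2_mulB; auto.
    apply Dom2_mulB; auto. apply Dom2_scal; auto.
    apply DomH_minus. apply DomH_scal. apply DomH_dph; auto. apply Dom2_scal; auto.
    apply DomH_dph; auto. apply (Dom2_ext (fun x => 2 * (u0 x * u0 x))). intro; ring.
    apply Dom2_scal. apply Dom2_mulB; auto. }
  assert (HJ : DomH dph J).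
  { apply (DomH_ext dph (fun x =>
       ((fun y => -2 * u1 y) x * u1 x * W0 x)
       + (fun y => u0 y * u0 y * W2 y - a * (u0 y * u0 y * W1 y) + u0 y * u0 y * (ph y * W1 y)
            + 2/3 * (u0 y * (u0 y * u0 y) * W1 y) - 3 * nu * (u1 y * u1 y * W1 y) + nu * (u0 y * u0 y * W3 y)) x
       + ((2 * a) * (dph x * u0 x * W0 x) - (dph x * (fun y => u0 y * u0 y) x * W0 x)))).
    { intro x. unfold J, Jf. ring. }
    apply DomH_plus. apply DomH_plus. apply DomH_of_Dom2. apply Dom2_mulW; auto. apply Dom2_scal; auto.
    apply DomH_of_Dom2.
    assert (Q00 : Dom2 (fun y => u0 y * u0 y)) by (apply Dom2_mulB; auto).
    assert (Q11 : Dom2 (fun y => u1 y * u1 y)) by (apply Dom2_mulB; auto).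
    repeat apply Dom2_plus; try apply Dom2_minus; try apply Dom2_plus; try apply Dom2_minus.
    all: try (apply Dom2_scal).
    all: try (apply Dom2_mulB; auto; try apply Bdd_W1; try apply Bdd_W2; try apply Bdd_W3; try (apply Bdd_mult; auto; apply Bdd_W1)).
    all: try (apply (Dom2_ext (fun y => u0 y * u0 y * u0 y)); [intro; ring|]; apply Dom2_mulB; auto).
    - apply Dom2_opp. apply Dom2_scal. apply Dom2_mulB; auto. apply Bdd_W1.
    - apply Dom2_opp. apply Dom2_scal. apply Dom2_mulB; auto. apply Bdd_W1.
    - apply DomH_minus. apply DomH_scal. apply DomH_dph; auto. apply DomH_dph; auto. apply Dom2_mulB; auto.
  }
  assert (IE : integrable_R E) by (apply (DomH_integrable dph E); auto).
  assert (IJ : integrable_R J) by (apply (DomH_integrable dph J); auto).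
  set (Fp := fun x => E x - J x).
  assert (IFp : integrable_R Fp) by (apply (DomH_integrable dph Fp); auto; apply DomH_minus; auto).
  assert (CFp : cts Fp) by (apply cts_minus; [apply HE | apply HJ]).
  assert (HderF : forall x, is_derive (Ff u0 u1 u2 W0 W1 W2 ph a nu) x (Fp x)).
  { intro x. unfold Fp, E, J, ut. apply F_deriv; auto. apply W0_deriv. apply W1_deriv. apply W2_deriv. }
  assert (Fvan : vanish (Ff u0 u1 u2 W0 W1 W2 ph a nu)).
  { apply (vanish_ext (fun x =>
      (fun y => 2 * (u0 y * u1 y) + a * (u0 y * u0 y) - u0 y * u0 y * ph y - 2/3 * (u0 y * u0 y * u0 y)
         - 2 * nu * (u0 y * u2 y) + nu * (u1 y * u1 y)) x * W0 x
      + (fun y => - (u0 y * u0 y * W1 y) + 2 * nu * (u0 y * u1 y * W1 y) - nu * (u0 y * u0 y * W2 y)) x)).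
    { intro x. unfold Ff. ring. }
    assert (Q00 : Dom2 (fun y => u0 y * u0 y)) by (apply Dom2_mulB; auto).
    assert (Q01 : Dom2 (fun y => u0 y * u1 y)) by (apply Dom2_mulB; auto).
    assert (Q11 : Dom2 (fun y => u1 y * u1 y)) by (apply Dom2_mulB; auto).
    assert (Q02 : Dom2 (fun y => u0 y * u2 y)) by (apply (Dom2_ext (fun y => u2 y * u0 y)); [intro; ring|]; apply Dom2_mulB; auto).
    apply vanish_plus. apply Dom2_vanish.
    - apply Dom2_plus; [|apply Dom2_scal; auto].
      apply Dom2_minus; [|apply Dom2_scal; auto].
      apply Dom2_minus; [|apply Dom2_scal; apply Dom2_mulB; auto].
      apply Dom2_minus; [|apply Dom2_mulB; auto].
      apply Dom2_plus; apply Dom2_scal; auto.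
    - apply Dom2_vanish0.
      apply Dom2_minus; [|apply Dom2_scal; apply Dom2_mulB; auto; apply Bdd_W2].
      apply Dom2_plus; [apply Dom2_opp|apply Dom2_scal]; apply Dom2_mulB; auto; apply Bdd_W1. }
  assert (IF0 : int_R Fp = 0) by (apply (int_deriv0 (Ff u0 u1 u2 W0 W1 W2 ph a nu)); auto).
  assert (EEJ : int_R E = int_R J).
  { rewrite (int_ext E (fun x => Fp x + J x)) by (intro; unfold Fp; ring).
    destruct (int_plus Fp J CFp (proj1 HJ) IFp IJ) as [_ Eq]. rewrite Eq, IF0. ring. }
  change (int_R E <= -1/4 * L2sq u0 + K1f D Phi A0sq nu * L2sq u1 + K2f Phi A0sq * a ^ 2).
  rewrite EEJ.
  assert (Q00 : Dom2 (fun y => u0 y ^ 2)) by (apply (Dom2_ext (fun y => u0 y * u0 y)); [intro; ring|]; apply Dom2_mulB; auto).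
  assert (Q11 : Dom2 (fun y => u1 y ^ 2)) by (apply (Dom2_ext (fun y => u1 y * u1 y)); [intro; ring|]; apply Dom2_mulB; auto).
  assert (I0 : integrable_R (fun y => u0 y ^ 2)) by (apply Dom2_integrable; auto).
  assert (I1 : integrable_R (fun y => u1 y ^ 2)) by (apply Dom2_integrable; auto).
  assert (CdW : cts (fun x => Rabs (dph x) * W0 x)) by (apply cts_mult; [apply cts_abs; auto| apply cts_W0]).
  assert (IdW : integrable_R (fun x => Rabs (dph x) * W0 x)).
  { apply (integrable_cmp _ (hp dph)); auto. intro x. unfold hp.
    pose proof (W0_le x). pose proof (W0_pos x). pose proof (Rabs_pos (dph x)).
    rewrite Rabs_mult, Rabs_Rabsolu, (Rabs_right (W0 x)) by lra. nra. }
  unfold L2sq.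
  set (A2 := int_R (fun y => u0 y ^ 2)).
  set (B := int_R (fun y => u1 y ^ 2)).
  set (Phi' := int_R (fun x => Rabs (dph x) * W0 x)).
  set (Ik := int_R k1).
  assert (HA2 : 0 <= A2) by (apply int_ge0; auto; [apply Q00| intro; apply pow2_ge_0]).
  assert (HB : 0 <= B) by (apply int_ge0; auto; [apply Q11| intro; apply pow2_ge_0]).
  assert (HPhi' : 0 <= Phi') by (apply int_ge0; auto; intro x; pose proof (W0_pos x); pose proof (Rabs_pos (dph x)); nra).
  assert (HIk : 0 <= Ik <= 4) by (split; [apply int_ge0; auto; [apply cts_k1|apply integrable_k1|apply k1_ge0] | pose proof int_k1_le; pose proof PI_4; unfold Ik; lra]).
  assert (HA' : A2 <= A0sq) by exact HA.
  assert (HPhi2 : Phi' <= Phi) by exact HPhi.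
  assert (HK0 : 0 <= K0f D Phi A0sq) by (unfold K0f; lra).
  set (et := etf D Phi A0sq).
  assert (Het : 0 < et) by (unfold et, etf; apply Rinv_0_lt_compat; lra).
  set (S2 := et * A2 + / et * B).
  assert (Sob : forall x, u0 x ^ 2 <= S2).
  { intro x. apply (sobolev u0 u1 et); auto. apply (Dom2_vanish0 u0 G0). }
  assert (HS2 : 0 <= S2) by (pose proof (Sob 0); pose proof (pow2_ge_0 (u0 0)); lra).
  set (S := sqrt S2).
  assert (HS : 0 <= S) by apply sqrt_pos.
  assert (HSS : S ^ 2 = S2) by (unfold S; rewrite <- Rsqr_pow2; apply Rsqr_sqrt; auto).
  set (P := fun x => 3 * Rabs nu * u1 x ^ 2 + (-1/2 + Rabs a + 2/3 * S) * u0 x ^ 2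
                     + (D * S ^ 2) * k1 x + (a ^ 2 + 2 * S ^ 2) * (Rabs (dph x) * W0 x)).
  destruct (int_lin4 (fun y => u1 y ^ 2) (fun y => u0 y ^ 2) k1 (fun x => Rabs (dph x) * W0 x)
      (3 * Rabs nu) (-1/2 + Rabs a + 2/3 * S) (D * S ^ 2) (a ^ 2 + 2 * S ^ 2)) as [IP EP];
    auto; try apply Q11; try apply Q00; try apply cts_k1; try apply integrable_k1.
  assert (HJP : int_R J <= int_R P).
  { apply int_le; auto. apply HJ. apply cts_plus; [apply cts_plus; [apply cts_plus|]|].
    apply cts_scal, Q11. apply cts_scal, Q00. apply cts_scal, cts_k1. apply cts_scal; auto.
    intro x. unfold J, Jf, P. apply pt_JP; auto. apply W0_pos. apply W1_abs. apply k1_ge0.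
    rewrite HSS. apply Sob. }
  unfold P in HJP. rewrite EP in HJP. fold A2 B Phi' Ik in HJP.
  eapply Rle_trans. exact HJP.
  rewrite HSS.
  apply (final_alg nu a A2 B S2 S D Phi Phi' Ik A0sq); auto; try lra.
Qed.

Section PDE.
Variables (nu : R) (phi x0 : R -> R) (v : R -> R -> R).
Hypothesis Hreg : regular_solution v.
Hypothesis Heq : forall t x, 0 < t ->
     dt 1 v t x - dx 2 v t x - Derive x0 t * dx 1 v t x
     - Derive x0 t * Derive phi x + Derive phi x * v t x
     + phi x * dx 1 v t x + v t x * dx 1 v t x + nu * dx 3 v t x = 0.

Lemma L_dx_deriv t k x : is_derive (dx k v t) x (dx (S k) v t x).
Proof.
  destruct Hreg as [_ [H2 _]]. specialize (H2 (S k) t x).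
  simpl in H2. unfold dx. simpl. apply Derive_correct. exact H2.
Qed.

Lemma L_cts_dx t k : cts (dx k v t).
Proof. apply (cts_of_derive _ (dx (S k) v t)). intro; apply L_dx_deriv. Qed.

Lemma L_cts_v t : cts (v t).
Proof. apply (L_cts_dx t 0). Qed.

Lemma L_c2d_v t x : continuity_2d_pt v t x.
Proof. destruct Hreg as [H1 _]. apply c2d_of_cont. apply H1. Qed.

Lemma L_c2d_dx t x k : 0 < t -> continuity_2d_pt (dx k v) t x.
Proof.
  intros Ht. destruct Hreg as [_ [_ [_ [H4 _]]]]. apply c2d_of_cont.
  exact (H4 0%nat k t x Ht).
Qed.

Lemma L_c2d_dt t x : 0 < t -> continuity_2d_pt (dt 1 v) t x.
Proof.
  intros Ht. destruct Hreg as [_ [_ [_ [H4 _]]]]. apply c2d_of_cont.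
  exact (H4 1%nat 0%nat t x Ht).
Qed.

Lemma L_vt t x : 0 < t -> is_derive (fun s => v s x) t (dt 1 v t x).
Proof.
  intros Ht. destruct Hreg as [_ [_ [H3 _]]]. specialize (H3 1%nat 0%nat t x Ht).
  simpl in H3. unfold dt. simpl. apply Derive_correct. exact H3.
Qed.

Lemma L_decay T : 0 < T -> exists M,
  (forall t x, 0 <= t <= T -> (1 + Rabs x) ^ 2 * Rabs (v t x) <= M) /\
  (forall k t x, (k <= 3)%nat -> 0 < t <= T -> (1 + Rabs x) ^ 2 * Rabs (dx k v t x) <= M) /\
  (forall t x, 0 < t <= T -> (1 + Rabs x) ^ 2 * Rabs (dt 1 v t x) <= M).
Proof.
  intros HT. destruct Hreg as [_ [_ [_ [_ H5]]]]. destruct (H5 T HT) as [M [HM1 HM2]].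
  exists M. split; auto. split.
  - intros k t x Hk Ht. exact (HM2 0%nat k t x ltac:(lia) Hk Ht).
  - intros t x Ht. exact (HM2 1%nat 0%nat t x ltac:(lia) ltac:(lia) Ht).
Qed.

Lemma L_Heq t x : 0 < t ->
  dt 1 v t x = utf (dx 0 v t) (dx 1 v t) (dx 2 v t) (dx 3 v t) phi (Derive phi) (Derive x0 t) nu x.
Proof.
  intros Ht. specialize (Heq t x Ht). unfold utf. change (dx 0 v t x) with (v t x). lra.
Qed.

End PDE.

Lemma int_cont_within (g : R -> R -> R) C al be t0 : al <= t0 <= be ->
  (forall t x, al <= t <= be -> continuity_2d_pt g t x) ->
  (forall t x, al <= t <= be -> Rabs (g t x) <= C * k1 x) ->
  forall eps : posreal, exists d : posreal, forall t, al <= t <= be -> Rabs (t - t0) < d ->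
    Rabs (int_R (g t) - int_R (g t0)) < eps.
Proof.
  intros Ht Hc Hb. apply (param_cont g (fun x => C * k1 x)); auto.
  apply cts_scal, cts_k1. apply int_scal. apply cts_k1. apply integrable_k1.
Qed.

Lemma int_cont_open (g : R -> R -> R) C al be t0 : al < t0 < be ->
  (forall t x, al <= t <= be -> continuity_2d_pt g t x) ->
  (forall t x, al <= t <= be -> Rabs (g t x) <= C * k1 x) ->
  continuous (fun t => int_R (g t)) t0.
Proof.
  intros Ht Hc Hb. apply cont_of_eps. intro eps.
  destruct (int_cont_within g C al be t0 ltac:(lra) Hc Hb eps) as [d Hd].
  assert (Hd' : 0 < Rmin d (Rmin (t0 - al) (be - t0))) by (apply Rmin_pos; [apply cond_pos| apply Rmin_pos; lra]).
  exists (mkposreal _ Hd'). intros y Hy. simpl in Hy.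
  pose proof (Rmin_l d (Rmin (t0 - al) (be - t0))). pose proof (Rmin_r d (Rmin (t0 - al) (be - t0))).
  pose proof (Rmin_l (t0 - al) (be - t0)). pose proof (Rmin_r (t0 - al) (be - t0)).
  apply Rabs_lt_elim in Hy as Hy'.
  apply Hd. lra. apply Rabs_def1; lra.
Qed.

Definition clamp (al be t : R) := Rmin be (Rmax al t).

Lemma clamp_in al be t : al <= be -> al <= clamp al be t <= be.
Proof. intros. unfold clamp. split. apply Rmin_glb; [lra| apply Rmax_l]. apply Rmin_l. Qed.

Lemma clamp_id al be t : al <= t <= be -> clamp al be t = t.
Proof. intros. unfold clamp. rewrite Rmax_right by lra. rewrite Rmin_right by lra. auto. Qed.

Lemma clamp_lip al be t s : al <= be -> Rabs (clamp al be t - clamp al be s) <= Rabs (t - s).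
Proof.
  intros H. unfold clamp.
  destruct (Rle_dec al t); destruct (Rle_dec al s);
  [rewrite (Rmax_right al t), (Rmax_right al s) by lra| rewrite (Rmax_right al t), (Rmax_left al s) by lra
  | rewrite (Rmax_left al t), (Rmax_right al s) by lra| rewrite (Rmax_left al t), (Rmax_left al s) by lra];
  (destruct (Rle_dec be t); destruct (Rle_dec be s); destruct (Rle_dec be al));
  repeat first [rewrite Rmin_left by lra | rewrite Rmin_right by lra];
  apply Rabs_le_intro; unfold Rabs; destruct Rcase_abs; lra.
Qed.

Lemma cont_clamp (F : R -> R) al be t0 : al <= t0 <= be ->
  (forall eps : posreal, exists d : posreal, forall t, al <= t <= be -> Rabs (t - t0) < d -> Rabs (F t - F t0) < eps) ->
  continuous (fun t => F (clamp al be t)) t0.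
Proof.
  intros Ht H. apply cont_of_eps. intro eps. destruct (H eps) as [d Hd]. exists d. intros y Hy.
  assert (E : clamp al be t0 = t0) by (apply clamp_id; lra).
  rewrite E. apply Hd. apply clamp_in; lra.
  eapply Rle_lt_trans; [| exact Hy].
  replace (clamp al be y - t0) with (clamp al be y - clamp al be t0) by (rewrite E; ring).
  apply clamp_lip; lra.
Qed.

Lemma dec_le (f x M : R) : (1 + Rabs x) ^ 2 * Rabs f <= M -> Rabs f <= M * q x.
Proof.
  intros H. unfold q. pose proof (Rabs_pos x).
  assert (Hp : 0 < (1 + Rabs x) ^ 2) by (apply pow_lt; lra).
  apply (Rmult_le_reg_l ((1 + Rabs x) ^ 2)); auto.
  replace ((1 + Rabs x) ^ 2 * (M * / (1 + Rabs x) ^ 2)) with M by (field; lra). auto.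
Qed.

Lemma dec_M0 (f x M : R) : (1 + Rabs x) ^ 2 * Rabs f <= M -> 0 <= M.
Proof. intros H. pose proof (Rabs_pos f). pose proof (Rabs_pos x). assert (0 <= (1 + Rabs x) ^ 2) by nra. nra. Qed.

Lemma dec_prodW f g x M : (1 + Rabs x) ^ 2 * Rabs f <= M -> (1 + Rabs x) ^ 2 * Rabs g <= M ->
  Rabs (f * g * W0 x) <= M * M * k1 x.
Proof.
  intros Hf Hg. apply dec_le in Hf as Hf'. apply dec_le in Hg as Hg'.
  pose proof (dec_M0 _ _ _ Hf) as HM.
  destruct (q_facts x) as [q1 [q2 [q3 [q4 q5]]]].
  pose proof (W0_le x). pose proof (W0_pos x).
  rewrite !Rabs_mult, (Rabs_right (W0 x)) by lra.
  pose proof (Rabs_pos f). pose proof (Rabs_pos g).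
  apply Rle_trans with ((M * q x) * (M * q x) * (1 + Rabs x)).
  apply Rmult_le_compat; try lra. apply Rmult_le_pos; auto. apply Rmult_le_compat; auto.
  replace (M * q x * (M * q x) * (1 + Rabs x)) with (M * M * q x * (q x * (1 + Rabs x))) by ring.
  assert (0 <= M * M * q x) by (apply Rmult_le_pos; [nra|lra]).
  apply Rle_trans with (M * M * q x * 1). apply Rmult_le_compat_l; auto.
  rewrite Rmult_1_r. apply Rmult_le_compat_l; nra.
Qed.

Lemma dec_prod f g x M : (1 + Rabs x) ^ 2 * Rabs f <= M -> (1 + Rabs x) ^ 2 * Rabs g <= M ->
  Rabs (f * g) <= M * M * k1 x.
Proof.
  intros Hf Hg. apply dec_le in Hf as Hf'. apply dec_le in Hg as Hg'.
  pose proof (dec_M0 _ _ _ Hf) as HM.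
  destruct (q_facts x) as [q1 [q2 [q3 [q4 q5]]]].
  rewrite Rabs_mult. pose proof (Rabs_pos f). pose proof (Rabs_pos g).
  apply Rle_trans with ((M * q x) * (M * q x)). apply Rmult_le_compat; auto.
  replace (M * q x * (M * q x)) with (M * M * q x * q x) by ring.
  assert (0 <= M * M * q x) by (apply Rmult_le_pos; [nra|lra]).
  apply Rle_trans with (M * M * q x * 1). apply Rmult_le_compat_l; auto.
  rewrite Rmult_1_r. apply Rmult_le_compat_l; nra.
Qed.

Definition Eg (v : R -> R -> R) (t : R) := int_R (fun x => v t x ^ 2 * W0 x).

Lemma c2d_W0 t x : continuity_2d_pt (fun _ y => W0 y) t x.
Proof.
  apply (continuity_1d_2d_pt_comp W0 (fun _ y => y)). apply continuity_pt_filterlim, cts_W0.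
  apply continuity_2d_pt_id2.
Qed.

Lemma c2d_sq (g : R -> R -> R) t x : continuity_2d_pt g t x -> continuity_2d_pt (fun u y => g u y ^ 2) t x.
Proof.
  intros H. apply (continuity_2d_pt_ext (fun u y => g u y * (g u y * 1))). intros; ring.
  apply continuity_2d_pt_mult; auto. apply continuity_2d_pt_mult; auto. apply continuity_2d_pt_const.
Qed.

Section PDE2.
Variables (nu : R) (phi x0 : R -> R) (v : R -> R -> R).
Hypothesis Hphi_smooth : forall n x, ex_derive_n phi n x.
Hypothesis Hphi_L1w : integrable_R (fun x => (1 + Rabs x) * Rabs (Derive phi x)).
Hypothesis Hx0 : forall t, 0 <= t -> ex_derive x0 t /\ continuous (Derive x0) t.
Hypothesis Hreg : regular_solution v.
Hypothesis Heq : forall t x, 0 < t ->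
     dt 1 v t x - dx 2 v t x - Derive x0 t * dx 1 v t x
     - Derive x0 t * Derive phi x + Derive phi x * v t x
     + phi x * dx 1 v t x + v t x * dx 1 v t x + nu * dx 3 v t x = 0.
Hypothesis Hmono : forall s t, 0 <= s <= t -> L2norm (v t) <= L2norm (v s).

Lemma L_phi_der x : is_derive phi x (Derive phi x).
Proof. apply Derive_correct. exact (Hphi_smooth 1%nat x). Qed.

Lemma L_cts_dphi : cts (Derive phi).
Proof.
  apply (cts_of_ex_derive). intro x. exact (Hphi_smooth 2%nat x).
Qed.

Lemma L_L2sq t : 0 <= t -> integrable_R (fun x => v t x ^ 2) /\ 0 <= L2sq (v t).
Proof.
  intros Ht. destruct (L_decay v Hreg (t + 1) ltac:(lra)) as [M [HM _]].
  assert (I : integrable_R (fun x => v t x ^ 2)).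
  { apply (integrable_cmp _ (fun x => M * M * k1 x)). apply cts_pow2, L_cts_v; auto.
    apply cts_scal, cts_k1.
    intro x. replace (v t x ^ 2) with (v t x * v t x) by ring. apply dec_prod; apply HM; lra.
    apply int_scal. apply cts_k1. apply integrable_k1. }
  split; auto. apply int_ge0; auto. apply cts_pow2, L_cts_v; auto. intro; apply pow2_ge_0.
Qed.

Lemma L_L2sq_mono s t : 0 <= s <= t -> L2sq (v t) <= L2sq (v s).
Proof.
  intros H. apply sqrt_le_0. apply L_L2sq; lra. apply L_L2sq; lra. apply Hmono; auto.
Qed.

Definition gam (D Phi A0sq : R) (t : R) :=
  -1/4 * L2sq (v t) + K1f D Phi A0sq nu * L2sq (dx 1 v t) + K2f Phi A0sq * Derive x0 t ^ 2.

Lemma cont_R_plus (f g : R -> R) (t : R) : continuous f t -> continuous g t -> continuous (fun y => f y + g y) t.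
Proof. intros. apply (continuous_plus f g); auto. Qed.
Lemma cont_R_mult (f g : R -> R) (t : R) : continuous f t -> continuous g t -> continuous (fun y => f y * g y) t.
Proof. intros. apply (continuous_mult f g); auto. Qed.
Lemma cont_R_const (c t : R) : continuous (fun _ : R => c) t.
Proof. apply continuous_const. Qed.

Lemma L_L2v_cont t : 0 < t -> continuous (fun s => L2sq (v s)) t.
Proof.
  intros Ht. destruct (L_decay v Hreg (t + 1) ltac:(lra)) as [M [HM _]].
  apply (int_cont_open (fun s x => v s x ^ 2) (M * M) (t/2) (t + 1)). lra.
  intros; apply c2d_sq, L_c2d_v; auto.
  intros s x Hs. replace (v s x ^ 2) with (v s x * v s x) by ring. apply dec_prod; apply HM; lra.
Qed.

Lemma L_L2dx_cont t : 0 < t -> continuous (fun s => L2sq (dx 1 v s)) t.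
Proof.
  intros Ht. destruct (L_decay v Hreg (t + 1) ltac:(lra)) as [M [_ [HM _]]].
  apply (int_cont_open (fun s x => dx 1 v s x ^ 2) (M * M) (t/2) (t + 1)). lra.
  intros; apply c2d_sq, L_c2d_dx; auto; lra.
  intros s x Hs. replace (dx 1 v s x ^ 2) with (dx 1 v s x * dx 1 v s x) by ring.
  apply dec_prod; apply HM; auto; lra.
Qed.

Lemma L_gam_cont D Phi A0sq t : 0 < t -> continuous (gam D Phi A0sq) t.
Proof.
  intros Ht. unfold gam.
  apply cont_R_plus. apply cont_R_plus.
  apply cont_R_mult. apply cont_R_const. apply L_L2v_cont; auto.
  apply cont_R_mult. apply cont_R_const. apply L_L2dx_cont; auto.
  apply cont_R_mult. apply cont_R_const.
  apply (continuous_ext (fun y => Derive x0 y * (Derive x0 y * 1))). intro; simpl; ring.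
  apply cont_R_mult. apply Hx0; lra. apply cont_R_mult. apply Hx0; lra. apply cont_R_const.
Qed.

Definition Phi0 := int_R (fun x => Rabs (Derive phi x) * W0 x).
Definition A0sq0 := L2sq (v 0).

Lemma L_energy D Bp : 0 <= D -> (forall x, W2 x + phi x * W1 x + nu * W3 x <= -1/2 + D * k1 x) ->
  (forall x, Rabs (phi x) <= Bp) ->
  forall s t, 0 < s <= t -> Eg v t - Eg v s <= RInt (gam D Phi0 A0sq0) s t.
Proof.
  intros HD Hc HBp s t Hst.
  destruct (L_decay v Hreg t ltac:(lra)) as [M [HM0 [HMk HMt]]].
  apply (energy_step (fun tau x => v tau x ^ 2 * W0 x) (fun tau x => 2 * v tau x * W0 x * dt 1 v tau x)
           (fun x => (M * M * 2) * k1 x) (gam D Phi0 A0sq0) s t); auto.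
  - intros tau x Htau. pose proof (L_vt v Hreg tau x Htau) as Hd.
    auto_derive. exists (dt 1 v tau x); exact Hd.
    assert (E : Derive (fun s0 => v s0 x) tau = dt 1 v tau x) by (apply is_derive_unique; exact Hd).
    rewrite E. ring.
  - intros tau x Htau.
    apply (continuity_2d_pt_mult (fun u y => 2 * v u y * W0 y) (fun u y => dt 1 v u y)).
    apply (continuity_2d_pt_mult (fun u y => 2 * v u y) (fun u y => W0 y)).
    apply (continuity_2d_pt_mult (fun u y => 2) (fun u y => v u y)).
    apply continuity_2d_pt_const. apply L_c2d_v; auto. apply c2d_W0. apply L_c2d_dt; auto.
  - intros tau Htau. apply cts_mult. apply cts_pow2, L_cts_v; auto. apply cts_W0.
  - apply cts_scal, cts_k1.
  - apply int_scal. apply cts_k1. apply integrable_k1.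
  - intros tau x Htau. replace (v tau x ^ 2 * W0 x) with (v tau x * v tau x * W0 x) by ring.
    eapply Rle_trans. apply dec_prodW; apply HM0; lra.
    pose proof (k1_ge0 x). assert (0 <= M) by (apply (dec_M0 (v 0 0) 0 M); apply HM0; lra). nra.
  - intros tau x Htau. replace (2 * v tau x * W0 x * dt 1 v tau x) with (2 * (v tau x * dt 1 v tau x * W0 x)) by ring.
    rewrite Rabs_mult, (Rabs_right 2) by lra.
    assert (Rabs (v tau x * dt 1 v tau x * W0 x) <= M * M * k1 x) by (apply dec_prodW; [apply HM0| apply HMt]; lra).
    lra.
  - apply (ex_RInt_continuous (V:=R_CompleteNormedModule)). intros z Hz. rewrite Rmin_left, Rmax_right in Hz by lra.
    apply L_gam_cont; lra.
  - intros tau Htau.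
    assert (Htp : 0 < tau) by lra.
    rewrite (int_ext _ (fun x => 2 * dx 0 v tau x * W0 x *
        utf (dx 0 v tau) (dx 1 v tau) (dx 2 v tau) (dx 3 v tau) phi (Derive phi) (Derive x0 tau) nu x)).
    2: { intro x. rewrite (L_Heq nu phi x0 v Heq tau x Htp). reflexivity. }
    destruct (L_decay v Hreg tau Htp) as [M' [_ [HMk' _]]].
    unfold gam.
    apply (spatial (dx 0 v tau) (dx 1 v tau) (dx 2 v tau) (dx 3 v tau) phi (Derive phi) (Derive x0 tau) nu M' Bp D Phi0 A0sq0).
    + intro; apply L_dx_deriv; auto.
    + intro; apply L_dx_deriv; auto.
    + intro; apply L_dx_deriv; auto.
    + apply L_cts_dx; auto.
    + apply L_phi_der.
    + apply L_cts_dphi.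
    + auto.
    + intro x. apply HMk'; [lia | lra].
    + intro x. apply HMk'; [lia | lra].
    + intro x. apply HMk'; [lia | lra].
    + intro x. apply HMk'; [lia | lra].
    + auto.
    + auto.
    + exact Hphi_L1w.
    + unfold Phi0. lra.
    + unfold A0sq0. apply (L_L2sq_mono 0 tau). lra.
Qed.

End PDE2.

Lemma RI_plus (f g : R -> R) a b : ex_RInt f a b -> ex_RInt g a b ->
  ex_RInt (fun x => f x + g x) a b /\ RInt (fun x => f x + g x) a b = RInt f a b + RInt g a b.
Proof.
  intros Hf Hg. split.
  apply (ex_RInt_plus (V:=R_NormedModule) f g); auto.
  apply (RInt_plus (V:=R_CompleteNormedModule)); auto.
Qed.
Lemma RI_scal (f : R -> R) c a b : ex_RInt f a b ->
  ex_RInt (fun x => c * f x) a b /\ RInt (fun x => c * f x) a b = c * RInt f a b.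
Proof.
  intros Hf. split.
  apply (ex_RInt_scal (V:=R_NormedModule) f); auto.
  apply (RInt_scal (V:=R_CompleteNormedModule)); auto.
Qed.
Lemma RI_chasles (f : R -> R) a b c : ex_RInt f a b -> ex_RInt f b c -> RInt f a b + RInt f b c = RInt f a c.
Proof. intros. apply (RInt_Chasles (V:=R_CompleteNormedModule)); auto. Qed.
Lemma RI_sub1 (f : R -> R) a b c : a <= b <= c -> ex_RInt f a c -> ex_RInt f a b.
Proof. intros. apply (ex_RInt_Chasles_1 (V:=R_CompleteNormedModule) f a b c); auto. Qed.
Lemma RI_sub2 (f : R -> R) a b c : a <= b <= c -> ex_RInt f a c -> ex_RInt f b c.
Proof. intros. apply (ex_RInt_Chasles_2 (V:=R_CompleteNormedModule) f a b c); auto. Qed.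
Lemma RI_cont (f : R -> R) a b : a <= b -> (forall z, a <= z <= b -> continuous f z) -> ex_RInt f a b.
Proof.
  intros Hab H. apply (ex_RInt_continuous (V:=R_CompleteNormedModule)).
  intros z Hz. rewrite Rmin_left, Rmax_right in Hz by lra. auto.
Qed.

Section PDE3.
Variables (nu : R) (phi x0 : R -> R) (v : R -> R -> R).
Hypothesis Hphi_smooth : forall n x, ex_derive_n phi n x.
Hypothesis Hphi_m : is_lim phi m_infty 1.
Hypothesis Hphi_p : is_lim phi p_infty (-1).
Hypothesis Hphi_L1w : integrable_R (fun x => (1 + Rabs x) * Rabs (Derive phi x)).
Hypothesis Hx0 : forall t, 0 <= t -> ex_derive x0 t /\ continuous (Derive x0) t.
Hypothesis Hreg : regular_solution v.
Hypothesis Heq : forall t x, 0 < t ->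
     dt 1 v t x - dx 2 v t x - Derive x0 t * dx 1 v t x
     - Derive x0 t * Derive phi x + Derive phi x * v t x
     + phi x * dx 1 v t x + v t x * dx 1 v t x + nu * dx 3 v t x = 0.
Hypothesis Hmono : forall s t, 0 <= s <= t -> L2norm (v t) <= L2norm (v s).
Hypothesis HC0 : exists C0, forall t, 0 < t ->
     ex_RInt (fun s => (Rabs (Derive x0 s)) ^ 2) 0 t /\
     ex_RInt (fun s => L2sq (dx 1 v s)) 0 t /\
     RInt (fun s => (Rabs (Derive x0 s)) ^ 2) 0 t
       + RInt (fun s => L2sq (dx 1 v s)) 0 t <= C0.

Lemma L_consts : exists D Bp, 0 <= D /\ (forall x, W2 x + phi x * W1 x + nu * W3 x <= -1/2 + D * k1 x) /\
  (forall x, Rabs (phi x) <= Bp).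
Proof.
  assert (Cph : cts phi) by (apply (cts_of_derive phi (Derive phi)); intro; apply (L_phi_der phi Hphi_smooth)).
  destruct (phi_facts phi Cph Hphi_m Hphi_p) as [R1 [B [HR1 [HB [Hb [Hp Hm]]]]]].
  exists ((2 + B + 3 * Rabs nu) * (1 + R1 ^ 2) + 15/8 + 3 * Rabs nu), B. repeat split; auto.
  - pose proof (Rabs_pos nu). assert (0 <= R1 ^ 2) by nra. nra.
  - apply c_bound; auto.
Qed.

Lemma L_Eg_int t : 0 <= t -> integrable_R (fun x => v t x ^ 2 * W0 x) /\ 0 <= Eg v t.
Proof.
  intros Ht. destruct (L_decay v Hreg (t + 1) ltac:(lra)) as [M [HM _]].
  assert (C : cts (fun x => v t x ^ 2 * W0 x)) by (apply cts_mult; [apply cts_pow2, L_cts_v; auto | apply cts_W0]).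
  assert (I : integrable_R (fun x => v t x ^ 2 * W0 x)).
  { apply (integrable_cmp _ (fun x => M * M * k1 x)); auto. apply cts_scal, cts_k1.
    intro x. replace (v t x ^ 2 * W0 x) with (v t x * v t x * W0 x) by ring. apply dec_prodW; apply HM; lra.
    apply int_scal. apply cts_k1. apply integrable_k1. }
  split; auto. apply int_ge0; auto. intro x. pose proof (W0_pos x). pose proof (pow2_ge_0 (v t x)). nra.
Qed.

Lemma L_a_within T : 0 < T -> forall t0, 0 <= t0 <= T ->
  forall eps : posreal, exists d : posreal, forall t, 0 <= t <= T -> Rabs (t - t0) < d ->
    Rabs (L2sq (v t) - L2sq (v t0)) < eps.
Proof.
  intros HT t0 Ht0. destruct (L_decay v Hreg T HT) as [M [HM _]].
  apply (int_cont_within (fun s x => v s x ^ 2) (M * M) 0 T t0); auto.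
  intros; apply c2d_sq, L_c2d_v; auto.
  intros s x Hs. replace (v s x ^ 2) with (v s x * v s x) by ring. apply dec_prod; apply HM; lra.
Qed.

Lemma L_exRInt_a T : 0 < T -> ex_RInt (fun s => L2sq (v s)) 0 T.
Proof.
  intros HT.
  apply (ex_RInt_ext (fun s => L2sq (v (clamp 0 (T + 1) s)))).
  { intros x Hx. rewrite Rmin_left, Rmax_right in Hx by lra. rewrite clamp_id; auto. lra. }
  apply RI_cont. lra. intros z Hz.
  apply (cont_clamp (fun s => L2sq (v s)) 0 (T + 1) z). lra.
  apply L_a_within; lra.
Qed.

Lemma L_Eg_right0 : forall eps : posreal, exists d : posreal, forall s, 0 <= s <= 1 -> s < d -> Eg v s <= Eg v 0 + eps.
Proof.
  intro eps. destruct (L_decay v Hreg 1 ltac:(lra)) as [M [HM _]].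
  destruct (int_cont_within (fun s x => v s x ^ 2 * W0 x) (M * M) 0 1 0 ltac:(lra)) with (eps := eps) as [d Hd].
  - intros. apply continuity_2d_pt_mult. apply c2d_sq, L_c2d_v; auto. apply c2d_W0.
  - intros s x Hs. replace (v s x ^ 2 * W0 x) with (v s x * v s x * W0 x) by ring. apply dec_prodW; apply HM; lra.
  - exists d. intros s Hs Hsd. specialize (Hd s Hs). unfold Eg.
    assert (Rabs (s - 0) < d) by (rewrite Rminus_0_r, Rabs_right; lra).
    specialize (Hd H). apply Rabs_lt_elim in Hd. lra.
Qed.

End PDE3.

Section PDE4.
Variables (nu : R) (phi x0 : R -> R) (v : R -> R -> R).
Hypothesis Hphi_smooth : forall n x, ex_derive_n phi n x.
Hypothesis Hphi_m : is_lim phi m_infty 1.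
Hypothesis Hphi_p : is_lim phi p_infty (-1).
Hypothesis Hphi_L1w : integrable_R (fun x => (1 + Rabs x) * Rabs (Derive phi x)).
Hypothesis Hx0 : forall t, 0 <= t -> ex_derive x0 t /\ continuous (Derive x0) t.
Hypothesis Hreg : regular_solution v.
Hypothesis Heq : forall t x, 0 < t ->
     dt 1 v t x - dx 2 v t x - Derive x0 t * dx 1 v t x
     - Derive x0 t * Derive phi x + Derive phi x * v t x
     + phi x * dx 1 v t x + v t x * dx 1 v t x + nu * dx 3 v t x = 0.
Hypothesis Hmono : forall s t, 0 <= s <= t -> L2norm (v t) <= L2norm (v s).
Hypothesis HC0 : exists C0, forall t, 0 < t ->
     ex_RInt (fun s => (Rabs (Derive x0 s)) ^ 2) 0 t /\
     ex_RInt (fun s => L2sq (dx 1 v s)) 0 t /\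
     RInt (fun s => (Rabs (Derive x0 s)) ^ 2) 0 t
       + RInt (fun s => L2sq (dx 1 v s)) 0 t <= C0.

Lemma L_b_nonneg t : 0 < t -> 0 <= L2sq (dx 1 v t).
Proof.
  intros Ht. destruct (L_decay v Hreg t Ht) as [M [_ [HM _]]].
  assert (C : cts (fun x => dx 1 v t x ^ 2)) by (apply cts_pow2, L_cts_dx; auto).
  apply int_ge0; auto.
  apply (integrable_cmp _ (fun x => M * M * k1 x)); auto. apply cts_scal, cts_k1.
  intro x. replace (dx 1 v t x ^ 2) with (dx 1 v t x * dx 1 v t x) by ring. apply dec_prod; apply HM; auto; lra.
  apply int_scal. apply cts_k1. apply integrable_k1.
  intro; apply pow2_ge_0.
Qed.

Lemma L_main : exists Q, 0 <= Q /\ forall t, 0 < t -> Eg v t + 1/4 * RInt (fun s => L2sq (v s)) 0 t <= Q.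
Proof.
  destruct (L_consts nu phi Hphi_smooth Hphi_m Hphi_p) as [D [Bp [HD [Hc HBp]]]].
  destruct HC0 as [C0 HC].
  set (Phi := Phi0 phi). set (A0 := A0sq0 v).
  assert (HPhi : 0 <= Phi).
  { unfold Phi, Phi0. pose proof (L_cts_dphi phi Hphi_smooth) as Cd.
    assert (CdW : cts (fun x => Rabs (Derive phi x) * W0 x)) by (apply cts_mult; [apply cts_abs; auto| apply cts_W0]).
    apply int_ge0; auto.
    apply (integrable_cmp _ (hp (Derive phi))); auto.
    unfold hp; apply cts_mult; [apply cts_plus; [apply cts_const| apply cts_abs, cts_id] | apply cts_abs; auto].
    intro x. unfold hp.
    pose proof (W0_le x). pose proof (W0_pos x). pose proof (Rabs_pos (Derive phi x)).
    rewrite Rabs_mult, Rabs_Rabsolu, (Rabs_right (W0 x)) by lra. nra.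
    intro x. pose proof (W0_pos x). pose proof (Rabs_pos (Derive phi x)). nra. }
  assert (HA0 : 0 <= A0) by (apply (L_L2sq v Hreg 0); lra).
  set (K1 := K1f D Phi A0 nu). set (K2 := K2f Phi A0).
  assert (HK1 : 0 <= K1).
  { unfold K1, K1f. assert (0 <= K0f D Phi A0) by (unfold K0f; lra). pose proof (Rabs_pos nu). nra. }
  assert (HK2 : 0 <= K2) by (unfold K2, K2f; lra).
  assert (H1 : 0 < 1) by lra.
  destruct (L_Eg_right0 v Hreg (mkposreal _ H1)) as [d Hd]. simpl in Hd.
  destruct (L_Eg_int v Hreg 0 ltac:(lra)) as [_ HE0].
  exists (Eg v 0 + 1 + (K1 + K2) * Rabs C0 + A0 / 4). split.
  { pose proof (Rabs_pos C0). assert (0 <= (K1 + K2) * Rabs C0) by nra. lra. }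
  intros t Ht.
  set (s := Rmin (d / 2) (Rmin t 1)).
  assert (Hs : 0 < s /\ s <= t /\ s <= 1 /\ s < d).
  { unfold s. pose proof (Rmin_l (d/2) (Rmin t 1)). pose proof (Rmin_r (d/2) (Rmin t 1)).
    pose proof (Rmin_l t 1). pose proof (Rmin_r t 1). destruct d as [dd dp]; simpl in *.
    repeat split; try lra. apply Rmin_pos; [lra| apply Rmin_pos; lra]. }
  destruct Hs as [Hs0 [Hst [Hs1 Hsd]]].
  pose proof (L_energy nu phi x0 v Hphi_smooth Hphi_L1w Hx0 Hreg Heq Hmono D Bp HD Hc HBp s t ltac:(lra)) as HE.
  fold Phi A0 in HE.
  destruct (HC t Ht) as [IX [IB Hsum]].
  set (a := fun s => L2sq (v s)).
  set (b := fun s => L2sq (dx 1 v s)).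
  set (X := fun s => Derive x0 s ^ 2).
  change (RInt (fun s => Rabs (Derive x0 s) ^ 2) 0 t + RInt b 0 t <= C0) in Hsum.
  change (ex_RInt b 0 t) in IB.
  assert (IX' : ex_RInt X 0 t).
  { apply (ex_RInt_ext (fun s => Rabs (Derive x0 s) ^ 2)); auto. intros; unfold X; apply pow2_abs. }
  assert (EX : RInt X 0 t = RInt (fun s => Rabs (Derive x0 s) ^ 2) 0 t).
  { apply RInt_ext. intros; unfold X; symmetry; apply pow2_abs. }
  assert (IA : ex_RInt a 0 t) by (apply (L_exRInt_a v Hreg); auto).
  assert (IAst : ex_RInt a s t) by (apply (RI_sub2 a 0 s t); auto; lra).
  assert (IA0s : ex_RInt a 0 s) by (apply (RI_sub1 a 0 s t); auto; lra).
  assert (IBst : ex_RInt b s t) by (apply (RI_sub2 b 0 s t); auto; lra).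
  assert (IB0s : ex_RInt b 0 s) by (apply (RI_sub1 b 0 s t); auto; lra).
  assert (IXst : ex_RInt X s t) by (apply (RI_sub2 X 0 s t); auto; lra).
  assert (IX0s : ex_RInt X 0 s) by (apply (RI_sub1 X 0 s t); auto; lra).
  assert (Egam : RInt (gam nu x0 v D Phi A0) s t = -1/4 * RInt a s t + K1 * RInt b s t + K2 * RInt X s t).
  { destruct (RI_scal a (-1/4) s t IAst) as [I1 E1].
    destruct (RI_scal b K1 s t IBst) as [I2 E2].
    destruct (RI_scal X K2 s t IXst) as [I3 E3].
    destruct (RI_plus _ _ s t I1 I2) as [I12 E12].
    destruct (RI_plus _ _ s t I12 I3) as [I123 E123].
    rewrite <- E1, <- E2, <- E3, <- E12, <- E123. reflexivity. }
  rewrite Egam in HE.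
  assert (Hb0s : 0 <= RInt b 0 s).
  { apply RInt_ge_0; auto. lra. intros; apply L_b_nonneg; lra. }
  assert (HX0s : 0 <= RInt X 0 s).
  { apply RInt_ge_0; auto. lra. intros; apply pow2_ge_0. }
  assert (HbX : 0 <= RInt b 0 t /\ 0 <= RInt X 0 t).
  { split; apply RInt_ge_0; auto; try lra. intros; apply L_b_nonneg; lra. intros; apply pow2_ge_0. }
  rewrite <- (RI_chasles b 0 s t) in Hsum, HbX by auto.
  rewrite <- (RI_chasles X 0 s t) in EX, HbX by auto.
  rewrite <- EX in Hsum.
  assert (Ha0s : RInt a 0 s <= s * A0).
  { apply Rle_trans with (RInt (fun _ => A0) 0 s).
    apply RInt_le; auto. lra. apply ex_RInt_const.
    intros y Hy. unfold a, A0, A0sq0. apply (L_L2sq_mono v Hreg Hmono 0 y); lra.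
    rewrite RInt_const. unfold scal; simpl; unfold mult; simpl. lra. }
  rewrite <- (RI_chasles a 0 s t) by auto.
  assert (HEs : Eg v s <= Eg v 0 + 1) by (apply Hd; lra).
  assert (HK : K1 * RInt b s t + K2 * RInt X s t <= (K1 + K2) * Rabs C0).
  { pose proof (Rabs_big C0).
    assert (K1 * RInt b s t <= K1 * (RInt X 0 s + RInt X s t + (RInt b 0 s + RInt b s t))) by (apply Rmult_le_compat_l; lra).
    assert (K2 * RInt X s t <= K2 * (RInt X 0 s + RInt X s t + (RInt b 0 s + RInt b s t))) by (apply Rmult_le_compat_l; lra).
    assert ((K1 + K2) * (RInt X 0 s + RInt X s t + (RInt b 0 s + RInt b s t)) <= (K1 + K2) * Rabs C0)
      by (apply Rmult_le_compat_l; lra).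
    lra. }
  assert (s * A0 <= A0) by nra.
  lra.
Qed.

End PDE4.

Section PDE5.
Variables (v : R -> R -> R).
Hypothesis Hreg : regular_solution v.
Hypothesis Hmono : forall s t, 0 <= s <= t -> L2norm (v t) <= L2norm (v s).
Variable Q : R.
Hypothesis HQ0 : 0 <= Q.
Hypothesis HQ : forall t, 0 < t -> Eg v t + 1/4 * RInt (fun s => L2sq (v s)) 0 t <= Q.

Lemma L_a_int_nonneg t : 0 < t -> 0 <= RInt (fun s => L2sq (v s)) 0 t.
Proof.
  intros Ht. apply RInt_ge_0. lra. apply (L_exRInt_a v Hreg); auto.
  intros; apply (L_L2sq v Hreg); lra.
Qed.

Lemma L_Eg_le t : 0 < t -> Eg v t <= Q.
Proof. intros Ht. pose proof (HQ t Ht). pose proof (L_a_int_nonneg t Ht). lra. Qed.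

Lemma L_a_int_le t : 0 < t -> RInt (fun s => L2sq (v s)) 0 t <= 4 * Q.
Proof. intros Ht. pose proof (HQ t Ht). pose proof (L_Eg_int v Hreg t ltac:(lra)) as [_ HH]. lra. Qed.

Lemma L_weighted t : 0 < t -> integrable_R (fun x => v t x ^ 2 * Rabs x) /\
  int_R (fun x => v t x ^ 2 * Rabs x) <= Eg v t.
Proof.
  intros Ht. destruct (L_decay v Hreg (t + 1) ltac:(lra)) as [M [HM _]].
  destruct (L_Eg_int v Hreg t ltac:(lra)) as [IE _].
  assert (C : cts (fun x => v t x ^ 2 * Rabs x)) by (apply cts_mult; [apply cts_pow2, L_cts_v; auto | apply cts_abs, cts_id]).
  assert (I : integrable_R (fun x => v t x ^ 2 * Rabs x)).
  { apply (integrable_cmp _ (fun x => v t x ^ 2 * W0 x)); auto.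
    apply cts_mult; [apply cts_pow2, L_cts_v; auto | apply cts_W0].
    intro x. pose proof (W0_ge_abs x). pose proof (pow2_ge_0 (v t x)). pose proof (Rabs_pos x).
    rewrite Rabs_mult, Rabs_Rabsolu, (Rabs_right (v t x ^ 2)) by lra. nra. }
  split; auto. unfold Eg. apply int_le; auto.
  apply cts_mult; [apply cts_pow2, L_cts_v; auto | apply cts_W0].
  intro x. pose proof (W0_ge_abs x). pose proof (pow2_ge_0 (v t x)). nra.
Qed.

Lemma L_concl1 : exists C, forall T, 0 < T ->
     ex_RInt (fun t => L2sq (v t)) 0 T /\
     forall t, 0 < t < T ->
       integrable_R (fun x => (v t x) ^ 2 * Rabs x) /\
       int_R (fun x => (v t x) ^ 2 * Rabs x)
         + RInt (fun s => L2sq (v s)) 0 T <= C.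
Proof.
  exists (5 * Q). intros T HT. split. apply (L_exRInt_a v Hreg); auto.
  intros t Ht. destruct (L_weighted t ltac:(lra)) as [I E]. split; auto.
  pose proof (L_Eg_le t ltac:(lra)). pose proof (L_a_int_le T HT). lra.
Qed.

Lemma L_concl2 : exists C, forall t, 0 < t -> L2norm (v t) <= C / sqrt t.
Proof.
  exists (sqrt (4 * Q)). intros t Ht.
  assert (Hta : t * L2sq (v t) <= 4 * Q).
  { eapply Rle_trans; [| apply L_a_int_le; auto].
    apply Rle_trans with (RInt (fun _ => L2sq (v t)) 0 t).
    rewrite RInt_const. unfold scal; simpl; unfold mult; simpl. lra.
    apply RInt_le. lra. apply ex_RInt_const. apply (L_exRInt_a v Hreg); auto.
    intros y Hy. apply (L_L2sq_mono v Hreg Hmono y t). lra. all: exact Ht. }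
  unfold L2norm. rewrite <- sqrt_div_alt by auto.
  apply sqrt_le_1_alt. apply (Rmult_le_reg_l t); auto.
  replace (t * (4 * Q / t)) with (4 * Q) by (field; lra). auto.
Qed.

End PDE5.

Lemma exp_le x y : x <= y -> exp x <= exp y.
Proof. intros H. destruct (Rle_lt_or_eq_dec x y H) as [Hl | ->]. left; apply exp_increasing; auto. lra. Qed.

Lemma exp_convex al s r : 0 <= al <= 1 -> exp (al * s + (1 - al) * r) <= al * exp s + (1 - al) * exp r.
Proof.
  intros Hal. set (m := al * s + (1 - al) * r).
  assert (E1 : exp s = exp m * exp (s - m)) by (rewrite <- exp_plus; f_equal; ring).
  assert (E2 : exp r = exp m * exp (r - m)) by (rewrite <- exp_plus; f_equal; ring).
  pose proof (exp_ineq1_le (s - m)). pose proof (exp_ineq1_le (r - m)). pose proof (exp_pos m).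
  rewrite E1, E2.
  assert (al * (exp m * exp (s - m)) >= al * (exp m * (1 + (s - m)))) by (apply Rle_ge, Rmult_le_compat_l; [lra| apply Rmult_le_compat_l; lra]).
  assert ((1 - al) * (exp m * exp (r - m)) >= (1 - al) * (exp m * (1 + (r - m)))) by (apply Rle_ge, Rmult_le_compat_l; [lra| apply Rmult_le_compat_l; lra]).
  assert (al * (exp m * (1 + (s - m))) + (1 - al) * (exp m * (1 + (r - m))) = exp m) by (unfold m; ring).
  lra.
Qed.

Lemma cont_ln x : 0 < x -> continuity_pt ln x.
Proof. intros Hx. apply derivable_continuous_pt. exact (exist _ (/ x) (derivable_pt_lim_ln x Hx)). Qed.

Definition hq (qq x : R) := exp (- qq * ln (1 + Rabs x)).

Lemma hq_pos qq x : 0 < hq qq x.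
Proof. apply exp_pos. Qed.

Lemma cts_hq qq : cts (hq qq).
Proof.
  intro x. unfold hq. apply continuity_pt_filterlim.
  apply (continuity_pt_comp (fun x => - qq * ln (1 + Rabs x)) exp).
  - apply continuity_pt_mult. apply continuity_pt_const; intros ? ?; auto.
    apply (continuity_pt_comp (fun x => 1 + Rabs x) ln).
    + apply continuity_pt_plus. apply continuity_pt_const; intros ? ?; auto. apply Rcontinuity_abs.
    + apply cont_ln. pose proof (Rabs_pos x); lra.
  - apply derivable_continuous_pt. apply derivable_pt_exp.
Qed.

Lemma RInt_hq_pos qq B : 1 < qq -> 0 <= B -> RInt (hq qq) 0 B <= / (qq - 1).
Proof.
  intros Hq HB.
  set (F := fun x => - exp ((1 - qq) * ln (1 + x)) / (qq - 1)).
  set (g := fun x => exp (- qq * ln (1 + x))).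
  assert (Hder : forall x, 0 <= x -> is_derive F x (g x)).
  { intros x Hx. unfold F, g. auto_derive. lra.
    replace (exp ((1 - qq) * ln (1 + x))) with (exp (- qq * ln (1 + x)) * (1 + x)).
    field. lra.
    rewrite <- (exp_ln (1 + x)) at 2 by lra. rewrite <- exp_plus. f_equal. ring. }
  assert (Cg : forall x, 0 <= x -> continuous g x).
  { intros x Hx. unfold g. apply continuity_pt_filterlim.
    apply (continuity_pt_comp (fun x => - qq * ln (1 + x)) exp).
    - apply continuity_pt_mult. apply continuity_pt_const; intros ? ?; auto.
      apply (continuity_pt_comp (fun x => 1 + x) ln).
      + apply continuity_pt_plus. apply continuity_pt_const; intros ? ?; auto. apply continuity_pt_id.
      + apply cont_ln. lra.
    - apply derivable_continuous_pt. apply derivable_pt_exp. }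
  rewrite (RInt_ext _ g).
  2: { intros x Hx. rewrite Rmin_left, Rmax_right in Hx by lra. unfold hq, g. rewrite Rabs_right by lra. auto. }
  rewrite (is_RInt_unique g 0 B (F B - F 0)).
  2: { apply (is_RInt_derive (V:=R_CompleteNormedModule) F g).
       intros x Hx; rewrite Rmin_left, Rmax_right in Hx by lra; apply Hder; lra.
       intros x Hx; rewrite Rmin_left, Rmax_right in Hx by lra; apply Cg; lra. }
  unfold F. rewrite Rplus_0_r, ln_1, Rmult_0_r, exp_0.
  pose proof (exp_pos ((1 - qq) * ln (1 + B))).
  apply (Rmult_le_reg_r (qq - 1)). lra.
  rewrite Rinv_l by lra. unfold Rdiv. rewrite Rmult_minus_distr_r, !Rmult_assoc, Rinv_l by lra. lra.
Qed.

Lemma hq_sym qq x : hq qq (- x) = hq qq x.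
Proof. unfold hq. rewrite Rabs_Ropp. auto. Qed.

Lemma RInt_hq_neg qq A : 1 < qq -> A <= 0 -> RInt (hq qq) A 0 <= / (qq - 1).
Proof.
  intros Hq HA.
  set (F := fun x => exp ((1 - qq) * ln (1 - x)) / (qq - 1)).
  set (g := fun x => exp (- qq * ln (1 - x))).
  assert (Hder : forall x, x <= 0 -> is_derive F x (g x)).
  { intros x Hx. unfold F, g. auto_derive. lra.
    replace (1 + - x) with (1 - x) by ring. replace (exp ((1 - qq) * ln (1 - x))) with (exp (- qq * ln (1 - x)) * (1 - x)).
    field. lra.
    rewrite <- (exp_ln (1 - x)) at 2 by lra. rewrite <- exp_plus. f_equal. ring. }
  assert (Cg : forall x, x <= 0 -> continuous g x).
  { intros x Hx. unfold g. apply continuity_pt_filterlim.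
    apply (continuity_pt_comp (fun x => - qq * ln (1 - x)) exp).
    - apply continuity_pt_mult. apply continuity_pt_const; intros ? ?; auto.
      apply (continuity_pt_comp (fun x => 1 - x) ln).
      + apply continuity_pt_minus. apply continuity_pt_const; intros ? ?; auto. apply continuity_pt_id.
      + apply cont_ln. lra.
    - apply derivable_continuous_pt. apply derivable_pt_exp. }
  rewrite (RInt_ext _ g).
  2: { intros x Hx. rewrite Rmin_left, Rmax_right in Hx by lra. unfold hq, g. rewrite Rabs_left by lra.
       replace (1 + - x) with (1 - x) by ring. auto. }
  rewrite (is_RInt_unique g A 0 (F 0 - F A)).
  2: { apply (is_RInt_derive (V:=R_CompleteNormedModule) F g).
       intros x Hx; rewrite Rmin_left, Rmax_right in Hx by lra; apply Hder; lra.
       intros x Hx; rewrite Rmin_left, Rmax_right in Hx by lra; apply Cg; lra. }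
  unfold F. rewrite Rminus_0_r, ln_1, Rmult_0_r, exp_0.
  pose proof (exp_pos ((1 - qq) * ln (1 - A))).
  apply (Rmult_le_reg_r (qq - 1)). lra.
  rewrite Rinv_l by lra. unfold Rdiv. rewrite Rmult_minus_distr_r, !Rmult_assoc, Rinv_l by lra. lra.
Qed.

Lemma integrable_hq qq : 1 < qq -> integrable_R (hq qq).
Proof.
  intros Hq. apply (integrable_mono (hq qq) (2 / (qq - 1))). apply cts_hq.
  intro; left; apply hq_pos.
  intros a b Hab.
  set (a' := Rmin a 0). set (b' := Rmax b 0).
  assert (Ha' : a' <= a /\ a' <= 0) by (split; [apply Rmin_l| apply Rmin_r]).
  assert (Hb' : b <= b' /\ 0 <= b') by (split; [apply Rmax_l| apply Rmax_r]).
  assert (Hc := cts_hq qq).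
  assert (H0 : forall x, 0 <= hq qq x) by (intro; left; apply hq_pos).
  apply Rle_trans with (RInt (hq qq) a' b').
  { rewrite <- (RInt_ChaslesR (hq qq) a' a b'), <- (RInt_ChaslesR (hq qq) a b b'); auto.
    pose proof (RInt_ge0_R (hq qq) a' a ltac:(lra) Hc H0).
    pose proof (RInt_ge0_R (hq qq) b b' ltac:(lra) Hc H0). lra. }
  rewrite <- (RInt_ChaslesR (hq qq) a' 0 b'); auto.
  pose proof (RInt_hq_neg qq a' Hq ltac:(lra)). pose proof (RInt_hq_pos qq b' Hq ltac:(lra)).
  unfold Rdiv. lra.
Qed.

Lemma rpow_nonneg a c : 0 <= rpow a c.
Proof. unfold rpow. destruct (Rle_dec a 0). lra. left. apply exp_pos. Qed.

Lemma rpow_mono a b c : 0 <= a <= b -> 0 <= c -> rpow a c <= rpow b c.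
Proof.
  intros Hab Hc. unfold rpow. destruct (Rle_dec a 0); destruct (Rle_dec b 0).
  - lra.
  - left; apply exp_pos.
  - lra.
  - apply Rle_Rpower_l; auto. lra.
Qed.

Lemma rpow_pt p x y : 1 < p < 2 ->
  rpow (Rabs y) p <= p / 2 * (y ^ 2 * (1 + Rabs x)) + (1 - p / 2) * hq (p / (2 - p)) x.
Proof.
  intros Hp. pose proof (hq_pos (p / (2 - p)) x). pose proof (Rabs_pos x).
  assert (0 <= y ^ 2 * (1 + Rabs x)) by (apply Rmult_le_pos; [apply pow2_ge_0| lra]).
  unfold rpow. destruct (Rle_dec (Rabs y) 0) as [Hz0|Hz0].
  - assert (0 <= p / 2 * (y ^ 2 * (1 + Rabs x))) by (apply Rmult_le_pos; lra).
    assert (0 <= (1 - p / 2) * hq (p / (2 - p)) x) by (apply Rmult_le_pos; lra). lra.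
  - assert (Hy : 0 < Rabs y) by lra. unfold Rpower.
    set (L := ln (1 + Rabs x)). set (ly := ln (Rabs y)).
    assert (Es : exp (2 * ly + L) = y ^ 2 * (1 + Rabs x)).
    { rewrite exp_plus. unfold L. rewrite exp_ln by lra. unfold ly.
      replace (2 * ln (Rabs y)) with (ln (Rabs y) + ln (Rabs y)) by ring.
      rewrite exp_plus, exp_ln by lra. rewrite <- pow2_abs. ring. }
    assert (Er : hq (p / (2 - p)) x = exp (- (p / (2 - p)) * L)) by reflexivity.
    rewrite <- Es, Er.
    replace (p * ly) with (p / 2 * (2 * ly + L) + (1 - p / 2) * (- (p / (2 - p)) * L)) by (field; lra).
    apply exp_convex. lra.
Qed.

Lemma cts_rpowabs p : 1 < p -> cts (fun y => rpow (Rabs y) p).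
Proof.
  intros Hp y0. apply cont_of_eps. intro eps.
  destruct (Req_dec y0 0) as [Hz | Hnz].
  - subst y0. assert (Hm : 0 < Rmin eps 1) by (apply Rmin_pos; [apply cond_pos| lra]).
    exists (mkposreal _ Hm). intros y Hy. simpl in Hy. rewrite Rminus_0_r in Hy.
    pose proof (Rmin_l eps 1). pose proof (Rmin_r eps 1).
    rewrite Rabs_R0. unfold rpow at 2. destruct (Rle_dec 0 0); [|lra]. rewrite Rminus_0_r.
    rewrite Rabs_right by apply Rle_ge, rpow_nonneg.
    unfold rpow. destruct (Rle_dec (Rabs y) 0). destruct eps; simpl in *; lra.
    unfold Rpower. assert (Hy0 : 0 < Rabs y) by lra.
    assert (ln (Rabs y) <= 0) by (rewrite <- ln_1; apply ln_le; lra).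
    apply Rle_lt_trans with (exp (ln (Rabs y))). apply exp_le. nra.
    rewrite exp_ln by lra. lra.
  - assert (Hy0 : 0 < Rabs y0) by (apply Rabs_pos_lt; auto).
    assert (Hc : continuous (fun y => exp (p * ln (Rabs y))) y0).
    { apply continuity_pt_filterlim.
      apply (continuity_pt_comp (fun y => p * ln (Rabs y)) exp).
      apply continuity_pt_mult. apply continuity_pt_const; intros ? ?; auto.
      apply (continuity_pt_comp Rabs ln). apply Rcontinuity_abs. apply cont_ln; auto.
      apply derivable_continuous_pt. apply derivable_pt_exp. }
    destruct (eps_of_cont _ _ Hc eps) as [d Hd].
    assert (Hd' : 0 < Rmin d (Rabs y0)) by (apply Rmin_pos; [apply cond_pos| lra]).
    exists (mkposreal _ Hd'). intros y Hy. simpl in Hy.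
    pose proof (Rmin_l d (Rabs y0)). pose proof (Rmin_r d (Rabs y0)).
    assert (Hy1 : 0 < Rabs y).
    { pose proof (Rabs_triang_inv y0 y). rewrite <- Rabs_Ropp in Hy. replace (- (y - y0)) with (y0 - y) in Hy by ring. lra. }
    unfold rpow. destruct (Rle_dec (Rabs y) 0); [lra|]. destruct (Rle_dec (Rabs y0) 0); [lra|].
    unfold Rpower. apply Hd. lra.
Qed.

Section PDE6.
Variables (v : R -> R -> R).
Hypothesis Hreg : regular_solution v.
Hypothesis Hmono : forall s t, 0 <= s <= t -> L2norm (v t) <= L2norm (v s).
Variable Q : R.
Hypothesis HQ0 : 0 <= Q.
Hypothesis HQ : forall t, 0 < t -> Eg v t + 1/4 * RInt (fun s => L2sq (v s)) 0 t <= Q.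

Lemma L_concl3 : forall p, 1 < p < 2 -> exists Cp, forall t, 0 < t ->
       integrable_R (fun x => rpow (Rabs (v t x)) p) /\ Lpnorm p (v t) <= Cp.
Proof.
  intros p Hp.
  set (qq := p / (2 - p)).
  assert (Hqq : 1 < qq).
  { unfold qq. apply (Rmult_lt_reg_r (2 - p)). lra. unfold Rdiv. rewrite Rmult_assoc, Rinv_l; lra. }
  set (Zq := int_R (hq qq)). set (A0 := L2sq (v 0)).
  set (Bd := p / 2 * (A0 + Q) + (1 - p / 2) * Zq).
  exists (rpow Bd (/ p)). intros t Ht.
  destruct (L_L2sq v Hreg t ltac:(lra)) as [Ia Ha0].
  destruct (L_Eg_int v Hreg t ltac:(lra)) as [IE HE0].
  assert (Ca : cts (fun x => v t x ^ 2)) by (apply cts_pow2, L_cts_v; auto).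
  assert (CE : cts (fun x => v t x ^ 2 * W0 x)) by (apply cts_mult; auto; apply cts_W0).
  set (Vw := fun x => v t x ^ 2 * (1 + Rabs x)).
  assert (CVw : cts Vw) by (unfold Vw; apply cts_mult; auto; apply cts_plus; [apply cts_const| apply cts_abs, cts_id]).
  destruct (int_plus _ _ Ca CE Ia IE) as [IaE EaE].
  assert (HVw : forall x, Vw x <= v t x ^ 2 + v t x ^ 2 * W0 x).
  { intro x. unfold Vw. pose proof (W0_ge_abs x). pose proof (pow2_ge_0 (v t x)). nra. }
  assert (IVw : integrable_R Vw).
  { apply (integrable_cmp _ (fun x => v t x ^ 2 + v t x ^ 2 * W0 x)); auto. apply cts_plus; auto.
    intro x. specialize (HVw x). unfold Vw in *. pose proof (Rabs_pos x). pose proof (pow2_ge_0 (v t x)).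
    rewrite Rabs_right; [lra| apply Rle_ge, Rmult_le_pos; lra]. }
  assert (HintVw : int_R Vw <= A0 + Q).
  { apply Rle_trans with (int_R (fun x => v t x ^ 2 + v t x ^ 2 * W0 x)).
    apply int_le; auto. apply cts_plus; auto.
    rewrite EaE. pose proof (L_Eg_le v Hreg Q HQ t Ht).
    assert (L2sq (v t) <= A0) by (apply (L_L2sq_mono v Hreg Hmono 0 t); lra).
    change (L2sq (v t) + Eg v t <= A0 + Q). lra. }
  set (RP := fun x => rpow (Rabs (v t x)) p).
  assert (CRP : cts RP).
  { intro x. unfold RP. apply (continuous_comp (v t) (fun y => rpow (Rabs y) p)). apply L_cts_v; auto.
    apply cts_rpowabs; lra. }
  set (H := fun x => p / 2 * Vw x + (1 - p / 2) * hq qq x).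
  assert (CH : cts H) by (apply cts_plus; apply cts_scal; auto; apply cts_hq).
  destruct (int_scal (p / 2) Vw CVw IVw) as [I1 E1].
  destruct (int_scal (1 - p / 2) (hq qq) (cts_hq qq) (integrable_hq qq Hqq)) as [I2 E2].
  destruct (int_plus _ _ (cts_scal (p/2) Vw CVw) (cts_scal (1 - p/2) _ (cts_hq qq)) I1 I2) as [IH EH].
  assert (HRP : forall x, RP x <= H x).
  { intro x. unfold RP, H, Vw, qq. apply rpow_pt; auto. }
  assert (IRP : integrable_R RP).
  { apply (integrable_cmp RP H); auto. intro x. rewrite Rabs_right. auto. apply Rle_ge, rpow_nonneg. }
  split; auto.
  unfold Lpnorm. apply rpow_mono; [split|].
  - apply int_ge0; auto. intro; apply rpow_nonneg.
  - apply Rle_trans with (int_R H). apply int_le; auto.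
    unfold H. rewrite EH, E1, E2. unfold Bd. fold Zq.
    assert (p / 2 * int_R Vw <= p / 2 * (A0 + Q)) by (apply Rmult_le_compat_l; lra). lra.
  - left. apply Rinv_0_lt_compat. lra.
Qed.

End PDE6.

Theorem mainTheorem2
  (nu : R) (phi : R -> R) (x0 : R -> R) (v : R -> R -> R)
  (* phi smooth, phi(-oo) = 1, phi(+oo) = -1 *)
  (Hphi_smooth : forall n x, ex_derive_n phi n x)
  (Hphi_m : is_lim phi m_infty 1)
  (Hphi_p : is_lim phi p_infty (-1))
  (* phi' in L^2 and int (1+|x|)|phi'| < oo *)
  (Hphi_L2 : integrable_R (fun x => (Derive phi x) ^ 2))
  (Hphi_L1w : integrable_R (fun x => (1 + Rabs x) * Rabs (Derive phi x)))
  (* x0 continuously differentiable on R_+ *)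
  (Hx0 : forall t, 0 <= t -> ex_derive x0 t /\ continuous (Derive x0) t)
  (* v a sufficiently regular solution of the equation *)
  (Hreg : regular_solution v)
  (Heq : forall t x, 0 < t ->
     dt 1 v t x - dx 2 v t x - Derive x0 t * dx 1 v t x
     - Derive x0 t * Derive phi x + Derive phi x * v t x
     + phi x * dx 1 v t x + v t x * dx 1 v t x + nu * dx 3 v t x = 0)
  (Hinit : integrable_R (fun x => (Rabs (v 0 x)) ^ 2 * (1 + Rabs x)))
  (* t |-> ||v(t)||_{L^2} nonincreasing *)
  (Hmono : forall s t, 0 <= s <= t -> L2norm (v t) <= L2norm (v s))
  (HC0 : exists C0, forall t, 0 < t ->
     ex_RInt (fun s => (Rabs (Derive x0 s)) ^ 2) 0 t /\
     ex_RInt (fun s => L2sq (dx 1 v s)) 0 t /\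
     RInt (fun s => (Rabs (Derive x0 s)) ^ 2) 0 t
       + RInt (fun s => L2sq (dx 1 v s)) 0 t <= C0) :
  (exists C, forall T, 0 < T ->
     ex_RInt (fun t => L2sq (v t)) 0 T /\
     forall t, 0 < t < T ->
       integrable_R (fun x => (v t x) ^ 2 * Rabs x) /\
       int_R (fun x => (v t x) ^ 2 * Rabs x)
         + RInt (fun s => L2sq (v s)) 0 T <= C)
  /\ (exists C, forall t, 0 < t -> L2norm (v t) <= C / sqrt t)
  /\ (forall p, 1 < p < 2 -> exists Cp, forall t, 0 < t ->
       integrable_R (fun x => rpow (Rabs (v t x)) p) /\ Lpnorm p (v t) <= Cp).
Proof.
  destruct (L_main nu phi x0 v Hphi_smooth Hphi_m Hphi_p Hphi_L1w Hx0 Hreg Heq Hmono HC0) as [Q [HQ0 HQ]].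
  split; [| split].
  - eapply L_concl1; eauto.
  - eapply L_concl2; eauto.
  - eapply L_concl3; eauto.
Qed.
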